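(* Let $(A,\phi)$ be a smooth solution of MKG on $\mathbb R^{1+4}$ with $\iota_TF=0$ and $\mathbf D_T\phi=0$, where $T=\partial_t$. If $\mathcal E_{\{0\}\times\mathbb R^4}[A,\phi]<\infty$, then $\mathcal E_{\{0\}\times\mathbb R^4}[A,\phi]=0$.
   Context: MKG on $\mathbb R^{1+4}$ (metric $\mathrm{diag}(-1,1,1,1,1)$): $\partial^\mu F_{\nu\mu}=\mathrm{Im}(\phi\overline{\mathbf D_\nu\phi})$, $\mathbf D^\mu\mathbf D_\mu\phi=0$, $A$ real 1-form, $\phi$ complex, $\mathbf D_\mu=\partial_\mu+iA_\mu$, $F_{\mu\nu}=\partial_\mu A_\nu-\partial_\nu A_\mu$; $\iota_TF=F(T,\cdot)$. $\mathcal E_S[A,\phi]=\frac12\int_S\sum_{0\le\mu<\nu\le4}|F_{\mu\nu}|^2+\sum_{\mu=0}^4|\mathbf D_\mu\phi|^2dx$. *)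

(* Defs.v *)
From Stdlib Require Import Reals List ClassicalEpsilon.
Open Scope R_scope.

(* Points of R^{1+4}: coordinates (t, x1, x2, x3, x4) = (x^0, ..., x^4). *)
Record P5 : Type := mkP { c0 : R; c1 : R; c2 : R; c3 : R; c4 : R }.

Definition coord (p : P5) (mu : nat) : R :=
  match mu with 0 => c0 p | 1 => c1 p | 2 => c2 p | 3 => c3 p | 4 => c4 p | _ => 0 end.

Definition upd (p : P5) (mu : nat) (s : R) : P5 :=
  match mu with
  | 0 => mkP s (c1 p) (c2 p) (c3 p) (c4 p)
  | 1 => mkP (c0 p) s (c2 p) (c3 p) (c4 p)
  | 2 => mkP (c0 p) (c1 p) s (c3 p) (c4 p)
  | 3 => mkP (c0 p) (c1 p) (c2 p) s (c4 p)
  | 4 => mkP (c0 p) (c1 p) (c2 p) (c3 p) s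
  | _ => p end.

Definition partial (mu : nat) (f : P5 -> R) (p : P5) : R :=
  epsilon (inhabits 0)
    (fun l => derivable_pt_lim (fun s => f (upd p mu s)) (coord p mu) l).

Definition iter_partial (l : list nat) (f : P5 -> R) : P5 -> R :=
  fold_right partial f l.

Definition continuous5 (f : P5 -> R) : Prop :=
  forall p eps, eps > 0 -> exists delta, delta > 0 /\
    forall q, (forall mu, (mu < 5)%nat -> Rabs (coord q mu - coord p mu) < delta) ->
      Rabs (f q - f p) < eps.

Definition smooth5 (f : P5 -> R) : Prop :=
  forall l : list nat, Forall (fun mu => (mu < 5)%nat) l ->
    continuous5 (iter_partial l f) /\
    forall mu, (mu < 5)%nat -> forall p, exists d,
      derivable_pt_lim (fun s => iter_partial l f (upd p mu s)) (coord p mu) d.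

(* A real 1-form: components A_mu, mu = 0..4.
   A complex scalar field: pair (Re phi, Im phi). *)
Definition Conn := nat -> P5 -> R.
Definition CField := P5 -> (R * R).

Definition eta (mu : nat) : R := match mu with 0 => -1 | _ => 1 end.

Definition Fcurv (A : Conn) (mu nu : nat) : P5 -> R :=
  fun p => partial mu (A nu) p - partial nu (A mu) p.

(* D_mu psi = d_mu psi + i A_mu psi *)
Definition Dcov (A : Conn) (psi : CField) (mu : nat) : CField :=
  fun p => (partial mu (fun q => fst (psi q)) p - A mu p * snd (psi p),
            partial mu (fun q => snd (psi q)) p + A mu p * fst (psi p)).

(* Im(phi * conj(D_nu phi)) *)
Definition Jcur (A : Conn) (phi : CField) (nu : nat) (p : P5) : R :=
  snd (phi p) * fst (Dcov A phi nu p) - fst (phi p) * snd (Dcov A phi nu p).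

Definition is_MKG (A : Conn) (phi : CField) : Prop :=
  (forall nu, (nu < 5)%nat -> forall p,
     sum_f_R0 (fun mu => eta mu * partial mu (Fcurv A nu mu) p) 4 = Jcur A phi nu p)
  /\ (forall p,
     sum_f_R0 (fun mu => eta mu * fst (Dcov A (Dcov A phi mu) mu p)) 4 = 0 /\
     sum_f_R0 (fun mu => eta mu * snd (Dcov A (Dcov A phi mu) mu p)) 4 = 0).

Definition smooth_sol (A : Conn) (phi : CField) : Prop :=
  (forall mu, (mu < 5)%nat -> smooth5 (A mu)) /\
  smooth5 (fun q => fst (phi q)) /\ smooth5 (fun q => snd (phi q)).

Definition edens (A : Conn) (phi : CField) (x1 x2 x3 x4 : R) : R :=
  let p := mkP 0 x1 x2 x3 x4 in
  / 2 * (sum_f_R0 (fun mu => sum_f_R0 (fun nu =>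
            if Nat.ltb mu nu then (Fcurv A mu nu p) ^ 2 else 0) 4) 4
         + sum_f_R0 (fun mu => (fst (Dcov A phi mu p)) ^ 2
                               + (snd (Dcov A phi mu p)) ^ 2) 4).

Definition riemann4 (g : R -> R -> R -> R -> R) (Rb : R) (n : nat) : R :=
  let h := 2 * Rb / INR (S n) in
  let m := fun i : nat => - Rb + (INR i + / 2) * h in
  sum_f_R0 (fun i1 => sum_f_R0 (fun i2 => sum_f_R0 (fun i3 => sum_f_R0 (fun i4 =>
     g (m i1) (m i2) (m i3) (m i4) * h ^ 4) n) n) n) n.

Definition cube_integral (g : R -> R -> R -> R -> R) (Rb I : R) : Prop :=
  Un_cv (riemann4 g Rb) I.

(* E is the (finite) value of int_{R^4} g = sup over cubes (g >= 0, continuous) *)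
Definition integral_R4_is (g : R -> R -> R -> R -> R) (E : R) : Prop :=
  is_lub (fun I => exists Rb, Rb > 0 /\ cube_integral g Rb I) E.

Definition energy0_is (A : Conn) (phi : CField) (E : R) : Prop :=
  integral_R4_is (edens A phi) E.

(* Main.v *)
Require Import Defs.
From Stdlib Require Import Reals Lra Lia List ClassicalEpsilon FunctionalExtensionality Classical.
From Coquelicot Require Coquelicot.
Open Scope R_scope.


Definition Dv (mu : nat) (f : P5 -> R) (p : P5) (l : R) : Prop :=
  derivable_pt_lim (fun s => f (upd p mu s)) (coord p mu) l.



Lemma partial_eq mu f p l : Dv mu f p l -> partial mu f p = l.
Proof.
  intro H. unfold partial.
  assert (Hs := epsilon_spec (inhabits 0)
    (fun l => derivable_pt_lim (fun s => f (upd p mu s)) (coord p mu) l)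
    (ex_intro _ l H)).
  eapply uniqueness_limite; eauto.
Qed.

Lemma upd_coord p mu : (mu < 5)%nat -> upd p mu (coord p mu) = p.
Proof. intro. destruct p; destruct mu as [|[|[|[|[|]]]]]; simpl; auto; lia. Qed.
Lemma coord_upd p mu s : (mu < 5)%nat -> coord (upd p mu s) mu = s.
Proof. intro. destruct p; destruct mu as [|[|[|[|[|]]]]]; simpl; auto; lia. Qed.
Lemma upd_upd p mu s t : upd (upd p mu s) mu t = upd p mu t.
Proof. destruct p; destruct mu as [|[|[|[|[|]]]]]; simpl; auto. Qed.
Lemma coord_upd_other p mu nu s : mu <> nu -> coord (upd p mu s) nu = coord p nu.
Proof. intro. destruct p; destruct mu as [|[|[|[|[|]]]]]; destruct nu as [|[|[|[|[|]]]]]; simpl; auto; lia. Qed.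

Lemma Dv_line mu f p s l : (mu < 5)%nat ->
  derivable_pt_lim (fun t => f (upd p mu t)) s l -> Dv mu f (upd p mu s) l.
Proof.
  intros Hmu H. unfold Dv. rewrite coord_upd by auto.
  eapply derivable_pt_lim_ext; [|exact H].
  intro t; simpl. rewrite upd_upd. reflexivity.
Qed.


Definition cont_at (f : P5 -> R) (p : P5) : Prop :=
  forall eps, eps > 0 -> exists delta, delta > 0 /\
    forall q, (forall mu, (mu < 5)%nat -> Rabs (coord q mu - coord p mu) < delta) ->
      Rabs (f q - f p) < eps.

Lemma cont5_at f : continuous5 f <-> forall p, cont_at f p.
Proof. split; intros H p; [intro; apply H | apply H]. Qed.

Lemma cont_at_const c p : cont_at (fun _ => c) p.
Proof. intros e He. exists 1; split; [lra|]. intros. rewrite Rminus_diag, Rabs_R0; lra. Qed.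

Lemma close_min q p d1 d2 :
  (forall mu, (mu < 5)%nat -> Rabs (coord q mu - coord p mu) < Rmin d1 d2) ->
  (forall mu, (mu < 5)%nat -> Rabs (coord q mu - coord p mu) < d1) /\
  (forall mu, (mu < 5)%nat -> Rabs (coord q mu - coord p mu) < d2).
Proof.
  intro H; split; intros mu Hmu; specialize (H mu Hmu);
  [apply Rlt_le_trans with (1:=H); apply Rmin_l | apply Rlt_le_trans with (1:=H); apply Rmin_r].
Qed.

Lemma cont_at_plus f g p : cont_at f p -> cont_at g p -> cont_at (fun q => f q + g q) p.
Proof.
  intros Hf Hg e He.
  destruct (Hf (e/2)) as [d1 [Hd1 H1]]; [lra|].
  destruct (Hg (e/2)) as [d2 [Hd2 H2]]; [lra|].
  exists (Rmin d1 d2); split; [apply Rmin_pos; auto|].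
  intros q Hq. destruct (close_min _ _ _ _ Hq) as [Q1 Q2].
  specialize (H1 q Q1); specialize (H2 q Q2).
  replace (f q + g q - (f p + g p)) with ((f q - f p) + (g q - g p)) by ring.
  eapply Rle_lt_trans; [apply Rabs_triang|]. lra.
Qed.

Lemma cont_at_opp f p : cont_at f p -> cont_at (fun q => - f q) p.
Proof.
  intros Hf e He. destruct (Hf e He) as [d [Hd H]]. exists d; split; auto.
  intros q Hq. replace (- f q - - f p) with (- (f q - f p)) by ring.
  rewrite Rabs_Ropp. auto.
Qed.

Lemma cont_at_mult f g p : cont_at f p -> cont_at g p -> cont_at (fun q => f q * g q) p.
Proof.
  intros Hf Hg e He.
  set (a := Rabs (f p)). set (b := Rabs (g p)).
  assert (Ha : 0 <= a) by apply Rabs_pos. assert (Hb : 0 <= b) by apply Rabs_pos.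
  set (e1 := Rmin 1 (e / (2 + a + b))).
  assert (He1 : 0 < e1). { apply Rmin_pos; [lra|]. apply Rdiv_lt_0_compat; lra. }
  assert (He1a : e1 <= 1) by apply Rmin_l.
  assert (He1b : e1 * (2 + a + b) <= e).
  { apply Rle_trans with (e / (2 + a + b) * (2 + a + b)).
    apply Rmult_le_compat_r; [lra| apply Rmin_r]. right; field; lra. }
  destruct (Hf e1 He1) as [d1 [Hd1 H1]].
  destruct (Hg e1 He1) as [d2 [Hd2 H2]].
  exists (Rmin d1 d2); split; [apply Rmin_pos; auto|].
  intros q Hq. destruct (close_min _ _ _ _ Hq) as [Q1 Q2].
  specialize (H1 q Q1); specialize (H2 q Q2).
  replace (f q * g q - f p * g p) with
    ((f q - f p) * (g q - g p) + f p * (g q - g p) + g p * (f q - f p)) by ring.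
  eapply Rle_lt_trans; [apply Rabs_triang|].
  eapply Rle_lt_trans; [apply Rplus_le_compat_r; apply Rabs_triang|].
  rewrite !Rabs_mult. fold a b.
  set (x := Rabs (f q - f p)) in *. set (y := Rabs (g q - g p)) in *.
  assert (0 <= x) by apply Rabs_pos. assert (0 <= y) by apply Rabs_pos.
  assert (x * y <= e1 * 1) by (apply Rmult_le_compat; lra).
  assert (a * y <= a * e1) by (apply Rmult_le_compat_l; lra).
  assert (b * x <= b * e1) by (apply Rmult_le_compat_l; lra).
  nra.
Qed.

Lemma cont_at_comp (h : R -> R) f p : continuity_pt h (f p) -> cont_at f p ->
  cont_at (fun q => h (f q)) p.
Proof.
  intros Hh Hf e He.
  destruct (Hh e He) as [d1 [Hd1 H1]].
  destruct (Hf d1 Hd1) as [d [Hd H]].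
  exists d; split; auto. intros q Hq.
  destruct (Req_dec (f q) (f p)) as [E|E].
  - rewrite E, Rminus_diag, Rabs_R0; lra.
  - apply (H1 (f q)). split. split. exact I. intro E2; apply E; symmetry; exact E2. simpl. unfold R_dist. apply H; auto.
Qed.

Lemma cont_at_coord k p : cont_at (fun q => coord q k) p.
Proof.
  intros e He. exists e; split; auto. intros q Hq.
  destruct (Nat.lt_ge_cases k 5) as [Hk|Hk]; [apply Hq; auto|].
  destruct k as [|[|[|[|[|]]]]]; try lia. simpl. rewrite Rminus_diag, Rabs_R0; lra.
Qed.


Fixpoint Ck (k : nat) (f : P5 -> R) : Prop :=
  match k with
  | O => continuous5 f
  | S k => continuous5 f /\ (forall mu, (mu < 5)%nat -> forall p, exists l, Dv mu f p l)
           /\ (forall mu, (mu < 5)%nat -> Ck k (partial mu f))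
  end.

Lemma Ck_cont k f : Ck k f -> continuous5 f.
Proof. destruct k; simpl; tauto. Qed.

Lemma Ck_S k f : Ck (S k) f -> Ck k f.
Proof.
  revert f; induction k; intros f H.
  - apply (Ck_cont 1). exact H.
  - destruct H as [H1 [H2 H3]]. split; [exact H1|split; [exact H2|]].
    intros mu Hmu. apply IHk. apply H3; auto.
Qed.

Lemma Ck_le k m f : (k <= m)%nat -> Ck m f -> Ck k f.
Proof. induction 1; auto. intro H0. apply IHle. apply Ck_S; auto. Qed.

Lemma Ck_Dv k f mu p : Ck (S k) f -> (mu < 5)%nat -> Dv mu f p (partial mu f p).
Proof.
  intros [_ [H _]] Hmu. destruct (H mu Hmu p) as [l Hl].
  rewrite (partial_eq _ _ _ _ Hl). exact Hl.
Qed.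

Lemma Ck_partial k f mu : Ck (S k) f -> (mu < 5)%nat -> Ck k (partial mu f).
Proof. intros [_ [_ H]] Hmu; auto. Qed.

Lemma smooth_Ck f : smooth5 f -> forall k l, Forall (fun mu => (mu < 5)%nat) l ->
  Ck k (iter_partial l f).
Proof.
  intros Hs k. induction k; intros l Hl.
  - apply (Hs l Hl).
  - destruct (Hs l Hl) as [Hc Hd]. split; [auto|split].
    + intros mu Hmu p. apply Hd; auto.
    + intros mu Hmu. apply (IHk (mu :: l)). constructor; auto.
Qed.

Lemma smooth_Ck0 f k : smooth5 f -> Ck k f.
Proof. intro H. apply (smooth_Ck f H k nil). constructor. Qed.

Inductive Ex : Type :=
| At (f : P5 -> R) | Cs (c : R) | Ad (a b : Ex) | Mu (a b : Ex) | Op (a : Ex).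

Fixpoint den (e : Ex) (q : P5) : R :=
  match e with
  | At f => f q | Cs c => c | Ad a b => den a q + den b q
  | Mu a b => den a q * den b q | Op a => - den a q end.

Fixpoint dE (mu : nat) (e : Ex) : Ex :=
  match e with
  | At f => At (partial mu f) | Cs c => Cs 0 | Ad a b => Ad (dE mu a) (dE mu b)
  | Mu a b => Ad (Mu (dE mu a) b) (Mu a (dE mu b)) | Op a => Op (dE mu a) end.

Fixpoint allAt (P : (P5 -> R) -> Prop) (e : Ex) : Prop :=
  match e with
  | At f => P f | Cs _ => True | Ad a b | Mu a b => allAt P a /\ allAt P b
  | Op a => allAt P a end.

Lemma allAt_impl (P Q : (P5 -> R) -> Prop) e : (forall f, P f -> Q f) -> allAt P e -> allAt Q e.
Proof. intro H; induction e; simpl; intuition. Qed.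

Lemma allAt_dE (P Q : (P5 -> R) -> Prop) mu e :
  (forall f, P f -> Q f) -> (forall f, P f -> Q (partial mu f)) -> allAt P e -> allAt Q (dE mu e).
Proof.
  intros H1 H2; induction e; simpl; intuition; eapply allAt_impl; eauto.
Qed.

Lemma den_Dv mu p e : (mu < 5)%nat -> allAt (fun f => exists l, Dv mu f p l) e ->
  Dv mu (den e) p (den (dE mu e) p).
Proof.
  intro Hmu. induction e; simpl; intro H.
  - destruct H as [l Hl]. rewrite (partial_eq _ _ _ _ Hl). exact Hl.
  - unfold Dv. apply derivable_pt_lim_const.
  - destruct H as [Ha Hb]. unfold Dv in *.
    apply (derivable_pt_lim_plus (fun s => den e1 (upd p mu s)) (fun s => den e2 (upd p mu s))); auto.
  - destruct H as [Ha Hb]. unfold Dv in *.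
    pose proof (derivable_pt_lim_mult (fun s => den e1 (upd p mu s)) (fun s => den e2 (upd p mu s)) _ _ _ (IHe1 Ha) (IHe2 Hb)) as HH.
    cbv beta in HH; rewrite upd_coord in HH by auto.
    eapply derivable_pt_lim_ext; [|exact HH]. intro; reflexivity.
  - unfold Dv in *.
    apply (derivable_pt_lim_opp (fun s => den e (upd p mu s))); auto.
Qed.

Lemma partial_den mu p e : (mu < 5)%nat -> allAt (fun f => exists l, Dv mu f p l) e ->
  partial mu (den e) p = den (dE mu e) p.
Proof. intros. apply partial_eq, den_Dv; auto. Qed.

Lemma den_cont e : allAt continuous5 e -> continuous5 (den e).
Proof.
  induction e; simpl; intros H; apply cont5_at; intro p.
  - apply cont5_at; exact H.
  - apply cont_at_const.
  - destruct H. apply cont_at_plus; [apply cont5_at, IHe1|apply cont5_at, IHe2]; auto.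
  - destruct H. apply cont_at_mult; [apply cont5_at, IHe1|apply cont5_at, IHe2]; auto.
  - apply cont_at_opp; apply cont5_at, IHe; auto.
Qed.

Lemma den_Ck k e : allAt (Ck k) e -> Ck k (den e).
Proof.
  revert e; induction k; intros e H.
  - apply den_cont; auto.
  - split; [|split].
    + apply den_cont. eapply allAt_impl; [|exact H]. apply Ck_cont.
    + intros mu Hmu p. eexists. apply den_Dv; auto.
      eapply allAt_impl; [|exact H]. intros f Hf. eexists; eapply Ck_Dv; eauto.
    + intros mu Hmu.
      replace (partial mu (den e)) with (den (dE mu e)).
      * apply IHk. eapply allAt_dE; [| |exact H].
        -- apply Ck_S.
        -- intros f Hf; apply Ck_partial; auto.
      * apply functional_extensionality; intro p. symmetry. apply partial_den; auto.
        eapply allAt_impl; [|exact H]. intros f Hf. eexists; eapply Ck_Dv; eauto.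
Qed.


Module MA4.
Import Coquelicot.Coquelicot.

Lemma upd_comm p i j u v : i <> j -> upd (upd p i u) j v = upd (upd p j v) i u.
Proof. intro. destruct p; destruct i as [|[|[|[|[|]]]]]; destruct j as [|[|[|[|[|]]]]]; simpl; auto; lia. Qed.

Lemma Derive_line k f r mu s0 : (mu < 5)%nat -> Ck (S k) f ->
  Derive (fun s => f (upd r mu s)) s0 = partial mu f (upd r mu s0).
Proof.
  intros Hmu Hf. apply is_derive_unique. apply is_derive_Reals.
  pose proof (Ck_Dv k f mu (upd r mu s0) Hf Hmu) as H. unfold Dv in H.
  rewrite coord_upd in H by auto.
  eapply derivable_pt_lim_ext; [|exact H]. intro z; simpl. rewrite upd_upd; auto.
Qed.

Lemma ex_derive_line k f r mu s0 : (mu < 5)%nat -> Ck (S k) f ->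
  ex_derive (fun s => f (upd r mu s)) s0.
Proof.
  intros Hmu Hf. exists (partial mu f (upd r mu s0)). apply is_derive_Reals.
  pose proof (Ck_Dv k f mu (upd r mu s0) Hf Hmu) as H. unfold Dv in H.
  rewrite coord_upd in H by auto.
  eapply derivable_pt_lim_ext; [|exact H]. intro z; simpl. rewrite upd_upd; auto.
Qed.

Lemma coord_upd2 p i j u v mu : i <> j -> (i < 5)%nat -> (j < 5)%nat ->
  Rabs (coord (upd (upd p i u) j v) mu - coord p mu) <= Rmax (Rabs (u - coord p i)) (Rabs (v - coord p j)).
Proof.
  intros Hij Hi Hj.
  destruct (Nat.eq_dec mu j) as [->|Hmj].
  - rewrite coord_upd by auto. apply Rmax_r.
  - rewrite coord_upd_other by auto.
    destruct (Nat.eq_dec mu i) as [->|Hmi].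
    + rewrite coord_upd by auto. apply Rmax_l.
    + rewrite coord_upd_other by auto. rewrite Rminus_diag, Rabs_R0.
      apply Rle_trans with (Rabs (u - coord p i)); [apply Rabs_pos|apply Rmax_l].
Qed.

Lemma cont2 (h : P5 -> R) p i j : i <> j -> (i < 5)%nat -> (j < 5)%nat -> continuous5 h ->
  continuity_2d_pt (fun u v => h (upd (upd p i u) j v)) (coord p i) (coord p j).
Proof.
  intros Hij Hi Hj Hh eps.
  destruct (Hh (upd (upd p i (coord p i)) j (coord p j)) eps (cond_pos eps)) as [d [Hd H]].
  exists (mkposreal d Hd). intros u v Hu Hv. simpl in Hu, Hv.
  apply H. intros mu Hmu.
  rewrite (upd_coord p i Hi).
  rewrite (upd_coord p j Hj).
  eapply Rle_lt_trans; [apply coord_upd2; auto|].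
  apply Rmax_lub_lt; auto.
Qed.

Lemma schwarz5 k f i j p : (i < 5)%nat -> (j < 5)%nat -> Ck (S (S k)) f ->
  partial i (partial j f) p = partial j (partial i f) p.
Proof.
  intros Hi Hj Hf.
  destruct (Nat.eq_dec i j) as [->|Hij]; [reflexivity|].
  set (g := fun u v => f (upd (upd p i u) j v)).
  assert (Hf1 : Ck (S k) (partial j f)) by (apply Ck_partial; auto).
  assert (Hf2 : Ck (S k) (partial i f)) by (apply Ck_partial; auto).
  assert (E1 : forall z y, Derive (fun t => g z t) y = partial j f (upd (upd p i z) j y)).
  { intros z y. unfold g. apply (Derive_line (S k)); auto. }
  assert (E2 : forall z y, Derive (fun t => g t z) y = partial i f (upd (upd p j z) i y)).
  { intros z y. unfold g.
    rewrite (Derive_ext (fun t => f (upd (upd p i t) j z)) (fun t => f (upd (upd p j z) i t))).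
    apply (Derive_line (S k)); auto. intro t. rewrite upd_comm; auto. }
  pose proof (Schwarz g (coord p i) (coord p j)) as HS.
  assert (L1 : forall u v, Derive (fun z => Derive (fun t => g z t) v) u = partial i (partial j f) (upd (upd p i u) j v)).
  { intros u v. rewrite (Derive_ext _ (fun z => partial j f (upd (upd p j v) i z))).
    rewrite (Derive_line k); auto. rewrite upd_comm; auto.
    intro z. rewrite E1, upd_comm; auto. }
  assert (L2 : forall u v, Derive (fun z => Derive (fun t => g t z) u) v = partial j (partial i f) (upd (upd p i u) j v)).
  { intros u v. rewrite (Derive_ext _ (fun z => partial i f (upd (upd p j z) i u))).
    2:{ intro z. rewrite E2. reflexivity. }
    rewrite (Derive_ext _ (fun z => partial i f (upd (upd p i u) j z))).
    2:{ intro z. rewrite upd_comm; auto. }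
    apply (Derive_line k); auto. }
  rewrite L1, L2 in HS.
  rewrite (upd_coord p i Hi), (upd_coord p j Hj) in HS.
  apply HS.
  - exists (mkposreal 1 Rlt_0_1). intros u v _ _. split; [|split; [|split]].
    + unfold g. apply (ex_derive_ext (fun z => f (upd (upd p j v) i z))).
      { intro z. rewrite upd_comm; auto. } apply (ex_derive_line (S k)); auto.
    + unfold g. apply (ex_derive_line (S k)); auto.
    + apply (ex_derive_ext (fun z => partial j f (upd (upd p j v) i z))).
      { intro z. rewrite E1, upd_comm; auto. } apply (ex_derive_line k); auto.
    + apply (ex_derive_ext (fun z => partial i f (upd (upd p i u) j z))).
      { intro z. rewrite E2, upd_comm; auto. } apply (ex_derive_line k); auto.
  - replace (fun u v => Derive (fun z => Derive (fun t => g z t) v) u) with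
      (fun u v => partial i (partial j f) (upd (upd p i u) j v)).
    apply cont2; auto. apply (Ck_cont k). apply Ck_partial; auto.
    do 2 (apply functional_extensionality; intro). rewrite L1; auto.
  - replace (fun u v => Derive (fun z => Derive (fun t => g t z) u) v) with
      (fun u v => partial j (partial i f) (upd (upd p i u) j v)).
    apply cont2; auto. apply (Ck_cont k). apply Ck_partial; auto.
    do 2 (apply functional_extensionality; intro). rewrite L2; auto.
Qed.

End MA4.
Import MA4.

Definition allk (f : P5 -> R) : Prop := forall k, Ck k f.

Lemma allk_partial f mu : (mu < 5)%nat -> allk f -> allk (partial mu f).
Proof. intros Hmu H k. apply Ck_partial; [apply H | exact Hmu]. Qed.

Lemma allk_den e : allAt allk e -> allk (den e).
Proof. intros H k. apply den_Ck. eapply allAt_impl; [|exact H]. auto. Qed.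

Lemma partial_den_k mu p e : (mu < 5)%nat -> allAt allk e ->
  partial mu (den e) p = den (dE mu e) p.
Proof.
  intros Hmu H. apply partial_den; auto. eapply allAt_impl; [|exact H].
  intros f Hf. exists (partial mu f p). apply (Ck_Dv 0); [apply Hf|auto].
Qed.

Lemma schwarz_k f i j p : (i < 5)%nat -> (j < 5)%nat -> allk f ->
  partial i (partial j f) p = partial j (partial i f) p.
Proof. intros. apply (schwarz5 0); [auto|auto|apply H1]. Qed.

Definition u1 (phi : CField) : P5 -> R := fun q => fst (phi q).
Definition u2 (phi : CField) : P5 -> R := fun q => snd (phi q).
Definition Dr (A : Conn) (phi : CField) (j : nat) : P5 -> R := fun q => fst (Dcov A phi j q).
Definition Di (A : Conn) (phi : CField) (j : nat) : P5 -> R := fun q => snd (Dcov A phi j q).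

Definition SM (A : Conn) (phi : CField) : Prop :=
  (forall mu, (mu < 5)%nat -> allk (A mu)) /\ allk (u1 phi) /\ allk (u2 phi).

Lemma SM_of A phi : smooth_sol A phi -> SM A phi.
Proof.
  intros [H1 [H2 H3]]. split; [|split].
  - intros mu Hmu k. apply smooth_Ck0; auto.
  - intro k. apply smooth_Ck0; auto.
  - intro k. apply smooth_Ck0; auto.
Qed.

Definition exDr A phi j := Ad (At (partial j (u1 phi))) (Op (Mu (At (A j)) (At (u2 phi)))).
Definition exDi A phi j := Ad (At (partial j (u2 phi))) (Mu (At (A j)) (At (u1 phi))).
Definition exF (A : Conn) j k := Ad (At (partial j (A k))) (Op (At (partial k (A j)))).

Lemma Dr_den A phi j : Dr A phi j = den (exDr A phi j).
Proof. apply functional_extensionality; intro q. unfold Dr, Dcov, exDr, u1, u2; simpl. ring. Qed.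
Lemma Di_den A phi j : Di A phi j = den (exDi A phi j).
Proof. apply functional_extensionality; intro q. unfold Di, Dcov, exDi, u1, u2; simpl. ring. Qed.
Lemma F_den A j k : Fcurv A j k = den (exF A j k).
Proof. apply functional_extensionality; intro q. unfold Fcurv, exF; simpl. ring. Qed.

Ltac allk_tac :=
  repeat match goal with
  | |- allAt _ _ => simpl
  | |- _ /\ _ => split
  | |- True => exact I
  | |- allk (partial _ _) => apply allk_partial; [lia|]
  | H : SM _ _ |- allk (u1 _) => apply (proj1 (proj2 H))
  | H : SM _ _ |- allk (u2 _) => apply (proj2 (proj2 H))
  | H : SM ?A _ |- allk (?A _) => apply (proj1 H); lia
  | |- allk (den _) => apply allk_den
  end.

Lemma allk_Dr A phi j : SM A phi -> (j < 5)%nat -> allk (Dr A phi j).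
Proof. intros. rewrite Dr_den. allk_tac. Qed.
Lemma allk_Di A phi j : SM A phi -> (j < 5)%nat -> allk (Di A phi j).
Proof. intros. rewrite Di_den. allk_tac. Qed.
Lemma allk_F A phi j k : SM A phi -> (j < 5)%nat -> (k < 5)%nat -> allk (Fcurv A j k).
Proof. intros. rewrite F_den. allk_tac. Qed.

Lemma comm_r A phi j k p : SM A phi -> (j < 5)%nat -> (k < 5)%nat ->
  partial j (Dr A phi k) p = partial k (Dr A phi j) p
    - Fcurv A j k p * u2 phi p + A j p * Di A phi k p - A k p * Di A phi j p.
Proof.
  intros HS Hj Hk. rewrite !Dr_den.
  rewrite !partial_den_k by (auto; allk_tac). simpl.
  rewrite (schwarz_k (u1 phi) j k) by (auto; allk_tac).
  unfold Di, Dcov, Fcurv, u1, u2; simpl. ring.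
Qed.

Lemma comm_i A phi j k p : SM A phi -> (j < 5)%nat -> (k < 5)%nat ->
  partial j (Di A phi k) p = partial k (Di A phi j) p
    + Fcurv A j k p * u1 phi p - A j p * Dr A phi k p + A k p * Dr A phi j p.
Proof.
  intros HS Hj Hk. rewrite !Di_den.
  rewrite !partial_den_k by (auto; allk_tac). simpl.
  rewrite (schwarz_k (u2 phi) j k) by (auto; allk_tac).
  unfold Dr, Dcov, Fcurv, u1, u2; simpl. ring.
Qed.

Lemma bianchi A phi i j k p : SM A phi -> (i < 5)%nat -> (j < 5)%nat -> (k < 5)%nat ->
  partial i (Fcurv A j k) p + partial j (Fcurv A k i) p + partial k (Fcurv A i j) p = 0.
Proof.
  intros HS Hi Hj Hk. rewrite !F_den.
  rewrite !partial_den_k by (auto; allk_tac). simpl.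
  rewrite (schwarz_k (A k) i j), (schwarz_k (A i) j k), (schwarz_k (A j) i k) by (auto; allk_tac).
  ring.
Qed.

Lemma F_anti A j k : Fcurv A k j = fun q => - Fcurv A j k q.
Proof. apply functional_extensionality; intro q. unfold Fcurv; ring. Qed.

Lemma partial_opp_fun mu f p : (mu < 5)%nat -> allk f ->
  partial mu (fun q => - f q) p = - partial mu f p.
Proof.
  intros Hmu Hf. change (fun q => - f q) with (den (Op (At f))).
  rewrite partial_den_k; simpl; auto.
Qed.

Lemma partial_F_anti A phi i j k p : SM A phi -> (i < 5)%nat -> (j < 5)%nat -> (k < 5)%nat ->
  partial i (Fcurv A k j) p = - partial i (Fcurv A j k) p.
Proof.
  intros. rewrite (F_anti A j k). apply partial_opp_fun; auto. apply allk_F with phi; auto.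
Qed.

Lemma partial_zero mu p : partial mu (fun _ => 0) p = 0.
Proof. apply partial_eq. unfold Dv. apply derivable_pt_lim_const. Qed.


Definition Jc A phi j p := u2 phi p * Dr A phi j p - u1 phi p * Di A phi j p.

Definition StaticHyp (A : Conn) (phi : CField) : Prop :=
  (forall nu, (nu < 5)%nat -> forall p, Fcurv A 0 nu p = 0) /\ (forall p, Dcov A phi 0 p = (0, 0)).

Lemma maxwell_sp A phi j p : is_MKG A phi -> StaticHyp A phi -> (j < 5)%nat ->
  partial 1 (Fcurv A j 1) p + partial 2 (Fcurv A j 2) p + partial 3 (Fcurv A j 3) p
  + partial 4 (Fcurv A j 4) p = Jc A phi j p.
Proof.
  intros [HM _] [HF0 _] Hj. specialize (HM j Hj p). simpl in HM.
  rewrite (F_anti A 0 j) in HM.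
  replace (fun q => - Fcurv A 0 j q) with (fun _ : P5 => 0) in HM.
  2: { apply functional_extensionality; intro q. rewrite HF0; auto. ring. }
  rewrite partial_zero in HM. unfold Jcur in HM. unfold Jc, u1, u2, Dr, Di. lra.
Qed.

Lemma wave_sp A phi p : is_MKG A phi -> StaticHyp A phi ->
  partial 1 (Dr A phi 1) p + partial 2 (Dr A phi 2) p + partial 3 (Dr A phi 3) p + partial 4 (Dr A phi 4) p
  - (A 1%nat p * Di A phi 1 p + A 2%nat p * Di A phi 2 p + A 3%nat p * Di A phi 3 p + A 4%nat p * Di A phi 4 p) = 0
  /\
  partial 1 (Di A phi 1) p + partial 2 (Di A phi 2) p + partial 3 (Di A phi 3) p + partial 4 (Di A phi 4) p
  + (A 1%nat p * Dr A phi 1 p + A 2%nat p * Dr A phi 2 p + A 3%nat p * Dr A phi 3 p + A 4%nat p * Dr A phi 4 p) = 0.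
Proof.
  intros [_ HW] [_ HD0]. destruct (HW p) as [W1 W2]. cbn [sum_f_R0] in W1, W2.
  assert (E : Dcov A phi 0 = fun _ => (0,0)) by (apply functional_extensionality; auto).
  assert (Z1 : fst (Dcov A (Dcov A phi 0) 0 p) = 0).
  { rewrite E. unfold Dcov; simpl. rewrite partial_zero. ring. }
  assert (Z2 : snd (Dcov A (Dcov A phi 0) 0 p) = 0).
  { rewrite E. unfold Dcov; simpl. rewrite partial_zero. ring. }
  rewrite Z1 in W1. rewrite Z2 in W2.
  change (fst (Dcov A (Dcov A phi 1) 1 p)) with (partial 1 (Dr A phi 1) p - A 1%nat p * Di A phi 1 p) in W1.
  change (fst (Dcov A (Dcov A phi 2) 2 p)) with (partial 2 (Dr A phi 2) p - A 2%nat p * Di A phi 2 p) in W1.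
  change (fst (Dcov A (Dcov A phi 3) 3 p)) with (partial 3 (Dr A phi 3) p - A 3%nat p * Di A phi 3 p) in W1.
  change (fst (Dcov A (Dcov A phi 4) 4 p)) with (partial 4 (Dr A phi 4) p - A 4%nat p * Di A phi 4 p) in W1.
  change (snd (Dcov A (Dcov A phi 1) 1 p)) with (partial 1 (Di A phi 1) p + A 1%nat p * Dr A phi 1 p) in W2.
  change (snd (Dcov A (Dcov A phi 2) 2 p)) with (partial 2 (Di A phi 2) p + A 2%nat p * Dr A phi 2 p) in W2.
  change (snd (Dcov A (Dcov A phi 3) 3 p)) with (partial 3 (Di A phi 3) p + A 3%nat p * Dr A phi 3 p) in W2.
  change (snd (Dcov A (Dcov A phi 4) 4 p)) with (partial 4 (Di A phi 4) p + A 4%nat p * Dr A phi 4 p) in W2.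
  simpl eta in W1, W2. split; lra.
Qed.


Definition exS4 (f : nat -> Ex) : Ex := Ad (f 1%nat) (Ad (f 2%nat) (Ad (f 3%nat) (f 4%nat))).
Definition exSD A phi : Ex :=
  exS4 (fun l => Ad (Mu (At (Dr A phi l)) (At (Dr A phi l))) (Mu (At (Di A phi l)) (At (Di A phi l)))).
Definition exSF (A : Conn) : Ex :=
  exS4 (fun l => exS4 (fun m => Mu (At (Fcurv A l m)) (At (Fcurv A l m)))).
Definition exT A phi j k : Ex :=
  Ad (Ad (Mu (At (Dr A phi j)) (At (Dr A phi k))) (Mu (At (Di A phi j)) (At (Di A phi k))))
     (Ad (exS4 (fun l => Mu (At (Fcurv A j l)) (At (Fcurv A k l))))
         (if Nat.eqb j k then Op (Ad (Mu (Cs (/2)) (exSD A phi)) (Mu (Cs (/4)) (exSF A))) else Cs 0)).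
Definition xc (k : nat) : P5 -> R := fun q => coord q k.
Definition exV A phi j : Ex := exS4 (fun k => Mu (exT A phi j k) (At (xc k))).

Lemma partial_xc mu k p : (mu < 5)%nat -> partial mu (xc k) p = if Nat.eqb mu k then 1 else 0.
Proof.
  intro Hmu. apply partial_eq. unfold Dv, xc.
  destruct (Nat.eqb_spec mu k) as [->|Hne].
  - eapply derivable_pt_lim_ext; [|apply derivable_pt_lim_id].
    intro z. rewrite coord_upd by auto; reflexivity.
  - eapply derivable_pt_lim_ext; [|apply derivable_pt_lim_const].
    intro z. rewrite coord_upd_other by auto; reflexivity.
Qed.

Lemma F_diag A l : Fcurv A l l = fun _ => 0.
Proof. apply functional_extensionality; intro q. unfold Fcurv; ring. Qed.

Lemma Fanti_p A j k p : Fcurv A k j p = - Fcurv A j k p.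
Proof. unfold Fcurv; ring. Qed.

Lemma pohozaev_pt A phi p : SM A phi -> is_MKG A phi -> StaticHyp A phi ->
  den (dE 1 (exV A phi 1)) p + den (dE 2 (exV A phi 2)) p + den (dE 3 (exV A phi 3)) p
  + den (dE 4 (exV A phi 4)) p = - den (exSD A phi) p.
Proof.
  intros HS HM HT.
  destruct (wave_sp A phi p HM HT) as [W1 W2].
  pose proof (maxwell_sp A phi 1 p HM HT ltac:(lia)) as M1.
  pose proof (maxwell_sp A phi 2 p HM HT ltac:(lia)) as M2.
  pose proof (maxwell_sp A phi 3 p HM HT ltac:(lia)) as M3.
  pose proof (maxwell_sp A phi 4 p HM HT ltac:(lia)) as M4.
  unfold exV, exT, exSD, exSF, exS4. cbn [den dE Nat.eqb].
  rewrite !partial_xc by lia. cbn [Nat.eqb].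
  rewrite (comm_r A phi 2 1 p HS ltac:(lia) ltac:(lia)).
  rewrite (comm_i A phi 2 1 p HS ltac:(lia) ltac:(lia)).
  rewrite (comm_r A phi 3 1 p HS ltac:(lia) ltac:(lia)).
  rewrite (comm_i A phi 3 1 p HS ltac:(lia) ltac:(lia)).
  rewrite (comm_r A phi 3 2 p HS ltac:(lia) ltac:(lia)).
  rewrite (comm_i A phi 3 2 p HS ltac:(lia) ltac:(lia)).
  rewrite (comm_r A phi 4 1 p HS ltac:(lia) ltac:(lia)).
  rewrite (comm_i A phi 4 1 p HS ltac:(lia) ltac:(lia)).
  rewrite (comm_r A phi 4 2 p HS ltac:(lia) ltac:(lia)).
  rewrite (comm_i A phi 4 2 p HS ltac:(lia) ltac:(lia)).
  rewrite (comm_r A phi 4 3 p HS ltac:(lia) ltac:(lia)).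
  rewrite (comm_i A phi 4 3 p HS ltac:(lia) ltac:(lia)).
  rewrite !F_diag, !partial_zero.
  rewrite !F_diag in M1, M2, M3, M4. rewrite !partial_zero in M1, M2, M3, M4.
  rewrite ?(partial_F_anti A phi 1 1 2 p HS ltac:(lia) ltac:(lia) ltac:(lia)) in *.
  rewrite ?(partial_F_anti A phi 2 1 2 p HS ltac:(lia) ltac:(lia) ltac:(lia)) in *.
  rewrite ?(partial_F_anti A phi 3 1 2 p HS ltac:(lia) ltac:(lia) ltac:(lia)) in *.
  rewrite ?(partial_F_anti A phi 4 1 2 p HS ltac:(lia) ltac:(lia) ltac:(lia)) in *.
  rewrite ?(Fanti_p A 1 2 p) in *.
  rewrite ?(partial_F_anti A phi 1 1 3 p HS ltac:(lia) ltac:(lia) ltac:(lia)) in *.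
  rewrite ?(partial_F_anti A phi 2 1 3 p HS ltac:(lia) ltac:(lia) ltac:(lia)) in *.
  rewrite ?(partial_F_anti A phi 3 1 3 p HS ltac:(lia) ltac:(lia) ltac:(lia)) in *.
  rewrite ?(partial_F_anti A phi 4 1 3 p HS ltac:(lia) ltac:(lia) ltac:(lia)) in *.
  rewrite ?(Fanti_p A 1 3 p) in *.
  rewrite ?(partial_F_anti A phi 1 2 3 p HS ltac:(lia) ltac:(lia) ltac:(lia)) in *.
  rewrite ?(partial_F_anti A phi 2 2 3 p HS ltac:(lia) ltac:(lia) ltac:(lia)) in *.
  rewrite ?(partial_F_anti A phi 3 2 3 p HS ltac:(lia) ltac:(lia) ltac:(lia)) in *.
  rewrite ?(partial_F_anti A phi 4 2 3 p HS ltac:(lia) ltac:(lia) ltac:(lia)) in *.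
  rewrite ?(Fanti_p A 2 3 p) in *.
  rewrite ?(partial_F_anti A phi 1 1 4 p HS ltac:(lia) ltac:(lia) ltac:(lia)) in *.
  rewrite ?(partial_F_anti A phi 2 1 4 p HS ltac:(lia) ltac:(lia) ltac:(lia)) in *.
  rewrite ?(partial_F_anti A phi 3 1 4 p HS ltac:(lia) ltac:(lia) ltac:(lia)) in *.
  rewrite ?(partial_F_anti A phi 4 1 4 p HS ltac:(lia) ltac:(lia) ltac:(lia)) in *.
  rewrite ?(Fanti_p A 1 4 p) in *.
  rewrite ?(partial_F_anti A phi 1 2 4 p HS ltac:(lia) ltac:(lia) ltac:(lia)) in *.
  rewrite ?(partial_F_anti A phi 2 2 4 p HS ltac:(lia) ltac:(lia) ltac:(lia)) in *.
  rewrite ?(partial_F_anti A phi 3 2 4 p HS ltac:(lia) ltac:(lia) ltac:(lia)) in *.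
  rewrite ?(partial_F_anti A phi 4 2 4 p HS ltac:(lia) ltac:(lia) ltac:(lia)) in *.
  rewrite ?(Fanti_p A 2 4 p) in *.
  rewrite ?(partial_F_anti A phi 1 3 4 p HS ltac:(lia) ltac:(lia) ltac:(lia)) in *.
  rewrite ?(partial_F_anti A phi 2 3 4 p HS ltac:(lia) ltac:(lia) ltac:(lia)) in *.
  rewrite ?(partial_F_anti A phi 3 3 4 p HS ltac:(lia) ltac:(lia) ltac:(lia)) in *.
  rewrite ?(partial_F_anti A phi 4 3 4 p HS ltac:(lia) ltac:(lia) ltac:(lia)) in *.
  rewrite ?(Fanti_p A 3 4 p) in *.
  assert (B123 : partial 3 (Fcurv A 1 2) p = partial 2 (Fcurv A 1 3) p - partial 1 (Fcurv A 2 3) p).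
  { pose proof (bianchi A phi 1 2 3 p HS ltac:(lia) ltac:(lia) ltac:(lia)) as HB.
    rewrite (partial_F_anti A phi 2 1 3 p HS ltac:(lia) ltac:(lia) ltac:(lia)) in HB. lra. }
  rewrite ?B123 in *.
  assert (B124 : partial 4 (Fcurv A 1 2) p = partial 2 (Fcurv A 1 4) p - partial 1 (Fcurv A 2 4) p).
  { pose proof (bianchi A phi 1 2 4 p HS ltac:(lia) ltac:(lia) ltac:(lia)) as HB.
    rewrite (partial_F_anti A phi 2 1 4 p HS ltac:(lia) ltac:(lia) ltac:(lia)) in HB. lra. }
  rewrite ?B124 in *.
  assert (B134 : partial 4 (Fcurv A 1 3) p = partial 3 (Fcurv A 1 4) p - partial 1 (Fcurv A 3 4) p).
  { pose proof (bianchi A phi 1 3 4 p HS ltac:(lia) ltac:(lia) ltac:(lia)) as HB.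
    rewrite (partial_F_anti A phi 3 1 4 p HS ltac:(lia) ltac:(lia) ltac:(lia)) in HB. lra. }
  rewrite ?B134 in *.
  assert (B234 : partial 4 (Fcurv A 2 3) p = partial 3 (Fcurv A 2 4) p - partial 2 (Fcurv A 3 4) p).
  { pose proof (bianchi A phi 2 3 4 p HS ltac:(lia) ltac:(lia) ltac:(lia)) as HB.
    rewrite (partial_F_anti A phi 3 2 4 p HS ltac:(lia) ltac:(lia) ltac:(lia)) in HB. lra. }
  rewrite ?B234 in *.
  unfold Jc in *.
  assert (E1 : partial 4 (Fcurv A 1 4) p = u2 phi p * Dr A phi 1 p - u1 phi p * Di A phi 1 p - partial 2 (Fcurv A 1 2) p - partial 3 (Fcurv A 1 3) p) by lra.
  assert (E2 : partial 4 (Fcurv A 2 4) p = u2 phi p * Dr A phi 2 p - u1 phi p * Di A phi 2 p + partial 1 (Fcurv A 1 2) p - partial 3 (Fcurv A 2 3) p) by lra.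
  assert (E3 : partial 4 (Fcurv A 3 4) p = u2 phi p * Dr A phi 3 p - u1 phi p * Di A phi 3 p + partial 1 (Fcurv A 1 3) p + partial 2 (Fcurv A 2 3) p) by lra.
  assert (E4 : partial 1 (Fcurv A 1 4) p = - (u2 phi p * Dr A phi 4 p - u1 phi p * Di A phi 4 p) - partial 2 (Fcurv A 2 4) p - partial 3 (Fcurv A 3 4) p) by lra.
  assert (E5 : partial 4 (Dr A phi 4) p = - (partial 1 (Dr A phi 1) p + partial 2 (Dr A phi 2) p + partial 3 (Dr A phi 3) p) + (A 1%nat p * Di A phi 1 p + A 2%nat p * Di A phi 2 p + A 3%nat p * Di A phi 3 p + A 4%nat p * Di A phi 4 p)) by lra.
  assert (E6 : partial 4 (Di A phi 4) p = - (partial 1 (Di A phi 1) p + partial 2 (Di A phi 2) p + partial 3 (Di A phi 3) p) - (A 1%nat p * Dr A phi 1 p + A 2%nat p * Dr A phi 2 p + A 3%nat p * Dr A phi 3 p + A 4%nat p * Dr A phi 4 p)) by lra.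
  rewrite E4 in *. rewrite E1, E2, E3, E5, E6.
  field.
Qed.


Fixpoint sumN (f : nat -> R) (N : nat) : R :=
  match N with O => 0 | S N => sumN f N + f N end.

Lemma sum_f_R0_sumN f n : sum_f_R0 f n = sumN f (S n).
Proof. induction n; simpl in *; [ring| rewrite IHn; ring]. Qed.

Lemma sumN_ext f g N : (forall i, (i < N)%nat -> f i = g i) -> sumN f N = sumN g N.
Proof. induction N; intro H; simpl; auto. rewrite IHN, H; auto. Qed.

Lemma sumN_plus f g N : sumN (fun i => f i + g i) N = sumN f N + sumN g N.
Proof. induction N; simpl; [ring| rewrite IHN; ring]. Qed.

Lemma sumN_minus f g N : sumN (fun i => f i - g i) N = sumN f N - sumN g N.
Proof. induction N; simpl; [ring| rewrite IHN; ring]. Qed.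

Lemma sumN_scal c f N : sumN (fun i => c * f i) N = c * sumN f N.
Proof. induction N; simpl; [ring| rewrite IHN; ring]. Qed.

Lemma sumN_le f g N : (forall i, (i < N)%nat -> f i <= g i) -> sumN f N <= sumN g N.
Proof. induction N; intro H; simpl; [lra|]. apply Rplus_le_compat; auto. Qed.

Lemma sumN_abs f N : Rabs (sumN f N) <= sumN (fun i => Rabs (f i)) N.
Proof.
  induction N; simpl. rewrite Rabs_R0; lra.
  eapply Rle_trans; [apply Rabs_triang|]. lra.
Qed.

Lemma sumN_const c N : sumN (fun _ => c) N = INR N * c.
Proof. induction N; simpl sumN; [simpl; ring|]. rewrite IHN, S_INR. ring. Qed.

Lemma sumN_split f N K : sumN f (N + K) = sumN f N + sumN (fun i => f (N + i)%nat) K.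
Proof.
  induction K; simpl. rewrite Nat.add_0_r; ring.
  rewrite Nat.add_succ_r. simpl. rewrite IHK. ring.
Qed.

Lemma sumN_reindex f N K : sumN f (N * K) = sumN (fun a => sumN (fun b => f (a * K + b)%nat) K) N.
Proof.
  induction N; simpl; auto.
  replace (K + N * K)%nat with (N * K + K)%nat by lia.
  rewrite sumN_split, IHN. reflexivity.
Qed.

Lemma sumN_swap (f : nat -> nat -> R) N K :
  sumN (fun i => sumN (fun j => f i j) K) N = sumN (fun j => sumN (fun i => f i j) N) K.
Proof.
  induction N; simpl.
  - induction K; simpl; auto. rewrite <- IHK; ring.
  - rewrite IHN. rewrite <- sumN_plus. reflexivity.
Qed.

Lemma sumN_tele (u : nat -> R) N : sumN (fun i => u (S i) - u i) N = u N - u O.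
Proof. induction N; simpl; [ring|]. rewrite IHN; ring. Qed.

Lemma sumN_nonneg f N : (forall i, (i < N)%nat -> 0 <= f i) -> 0 <= sumN f N.
Proof. intro H. replace 0 with (sumN (fun _ => 0) N). apply sumN_le; auto.
  rewrite sumN_const; ring. Qed.

Definition Q4 (N : nat) (F : nat -> nat -> nat -> nat -> R) : R :=
  sumN (fun i1 => sumN (fun i2 => sumN (fun i3 => sumN (fun i4 => F i1 i2 i3 i4) N) N) N) N.

Lemma Q4_ext N F G : (forall i1 i2 i3 i4, (i1 < N)%nat -> (i2 < N)%nat -> (i3 < N)%nat -> (i4 < N)%nat ->
  F i1 i2 i3 i4 = G i1 i2 i3 i4) -> Q4 N F = Q4 N G.
Proof.
  intro H. unfold Q4. apply sumN_ext; intros. apply sumN_ext; intros.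
  apply sumN_ext; intros. apply sumN_ext; intros. auto.
Qed.

Lemma Q4_plus N F G : Q4 N (fun a b c d => F a b c d + G a b c d) = Q4 N F + Q4 N G.
Proof.
  unfold Q4. rewrite <- sumN_plus. apply sumN_ext; intros.
  rewrite <- sumN_plus. apply sumN_ext; intros.
  rewrite <- sumN_plus. apply sumN_ext; intros.
  rewrite <- sumN_plus. reflexivity.
Qed.

Lemma Q4_scal N c F : Q4 N (fun a b d e => c * F a b d e) = c * Q4 N F.
Proof.
  unfold Q4. rewrite <- sumN_scal. apply sumN_ext; intros.
  rewrite <- sumN_scal. apply sumN_ext; intros.
  rewrite <- sumN_scal. apply sumN_ext; intros.
  rewrite <- sumN_scal. reflexivity.
Qed.

Lemma Q4_le N F G : (forall i1 i2 i3 i4, (i1 < N)%nat -> (i2 < N)%nat -> (i3 < N)%nat -> (i4 < N)%nat ->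
  F i1 i2 i3 i4 <= G i1 i2 i3 i4) -> Q4 N F <= Q4 N G.
Proof.
  intro H. unfold Q4. apply sumN_le; intros. apply sumN_le; intros.
  apply sumN_le; intros. apply sumN_le; intros. auto.
Qed.

Lemma Q4_const N c : Q4 N (fun _ _ _ _ => c) = INR N ^ 4 * c.
Proof. unfold Q4. rewrite !sumN_const. ring. Qed.

Lemma Q4_abs N F : Rabs (Q4 N F) <= Q4 N (fun a b c d => Rabs (F a b c d)).
Proof.
  unfold Q4. eapply Rle_trans; [apply sumN_abs|]. apply sumN_le; intros.
  eapply Rle_trans; [apply sumN_abs|]. apply sumN_le; intros.
  eapply Rle_trans; [apply sumN_abs|]. apply sumN_le; intros.
  apply sumN_abs.
Qed.

Lemma Q4_abs_bound N F c : (forall i1 i2 i3 i4, (i1 < N)%nat -> (i2 < N)%nat -> (i3 < N)%nat -> (i4 < N)%nat ->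
  Rabs (F i1 i2 i3 i4) <= c) -> Rabs (Q4 N F) <= INR N ^ 4 * c.
Proof.
  intro H. eapply Rle_trans; [apply Q4_abs|]. rewrite <- Q4_const. apply Q4_le. auto.
Qed.

Lemma Q4_refine N K F : Q4 (N * K) F =
  Q4 N (fun a1 a2 a3 a4 => Q4 K (fun b1 b2 b3 b4 => F (a1*K+b1)%nat (a2*K+b2)%nat (a3*K+b3)%nat (a4*K+b4)%nat)).
Proof.
  unfold Q4. rewrite sumN_reindex. apply sumN_ext; intros a1 _.
  transitivity (sumN (fun b1 => sumN (fun a2 => sumN (fun b2 => sumN (fun a3 => sumN (fun b3 =>
     sumN (fun a4 => sumN (fun b4 => F (a1*K+b1)%nat (a2*K+b2)%nat (a3*K+b3)%nat (a4*K+b4)%nat) K) N) K) N) K) N) K).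
  { apply sumN_ext; intros b1 _. rewrite sumN_reindex. apply sumN_ext; intros a2 _.
    apply sumN_ext; intros b2 _. rewrite sumN_reindex. apply sumN_ext; intros a3 _.
    apply sumN_ext; intros b3 _. rewrite sumN_reindex. reflexivity. }
  rewrite sumN_swap. apply sumN_ext; intros a2 _.
  transitivity (sumN (fun b1 => sumN (fun a3 => sumN (fun b2 => sumN (fun b3 =>
     sumN (fun a4 => sumN (fun b4 => F (a1*K+b1)%nat (a2*K+b2)%nat (a3*K+b3)%nat (a4*K+b4)%nat) K) N) K) K) N) K).
  { apply sumN_ext; intros b1 _. rewrite sumN_swap. apply sumN_ext; intros a3 _.
    apply sumN_ext; intros b2 _. reflexivity. }
  rewrite sumN_swap. apply sumN_ext; intros a3 _.
  transitivity (sumN (fun b1 => sumN (fun b2 => sumN (fun a4 => sumN (fun b3 =>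
     sumN (fun b4 => F (a1*K+b1)%nat (a2*K+b2)%nat (a3*K+b3)%nat (a4*K+b4)%nat) K) K) N) K) K).
  { apply sumN_ext; intros b1 _. apply sumN_ext; intros b2 _. rewrite sumN_swap. reflexivity. }
  transitivity (sumN (fun b1 => sumN (fun a4 => sumN (fun b2 => sumN (fun b3 =>
     sumN (fun b4 => F (a1*K+b1)%nat (a2*K+b2)%nat (a3*K+b3)%nat (a4*K+b4)%nat) K) K) K) N) K).
  { apply sumN_ext; intros b1 _. rewrite sumN_swap. reflexivity. }
  rewrite sumN_swap. reflexivity.
Qed.

Definition hh (M : R) (N : nat) : R := 2 * M / INR N.
Definition mid (M : R) (N : nat) (i : nat) : R := - M + (INR i + / 2) * hh M N.

Lemma riemann4_Q4 g M n : riemann4 g M n =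
  Q4 (S n) (fun i1 i2 i3 i4 => g (mid M (S n) i1) (mid M (S n) i2) (mid M (S n) i3) (mid M (S n) i4) * hh M (S n) ^ 4).
Proof.
  unfold riemann4, Q4, mid, hh. rewrite sum_f_R0_sumN. apply sumN_ext; intros.
  rewrite sum_f_R0_sumN. apply sumN_ext; intros.
  rewrite sum_f_R0_sumN. apply sumN_ext; intros.
  rewrite sum_f_R0_sumN. reflexivity.
Qed.

Lemma INRpos N : (0 < N)%nat -> 0 < INR N.
Proof. intro. apply lt_0_INR; auto. Qed.

Lemma mid_in M N i : 0 < M -> (i < N)%nat -> - M < mid M N i < M.
Proof.
  intros HM Hi. unfold mid, hh.
  assert (HN : 0 < INR N) by (apply INRpos; lia).
  assert (Hi' : INR i + 1 <= INR N) by (rewrite <- S_INR; apply le_INR; lia).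
  assert (0 <= INR i) by apply pos_INR.
  split.
  - assert (0 < (INR i + / 2) * (2 * M / INR N)).
    { apply Rmult_lt_0_compat; [lra|]. apply Rdiv_lt_0_compat; lra. }
    lra.
  - assert (E : (INR i + / 2) * (2 * M / INR N) = 2 * M * (INR i + / 2) * / INR N) by (field; lra).
    rewrite E. apply Rlt_le_trans with (- M + 2 * M * (INR N) * / INR N).
    + apply Rplus_lt_compat_l. apply Rmult_lt_compat_r. apply Rinv_0_lt_compat; lra.
      apply Rmult_lt_compat_l; lra.
    + right. field. lra.
Qed.

Lemma hh_pos M N : 0 < M -> (0 < N)%nat -> 0 < hh M N.
Proof. intros. unfold hh. apply Rdiv_lt_0_compat; [lra| apply INRpos; auto]. Qed.

Lemma riemann4_plus g1 g2 M n :
  riemann4 (fun a b c d => g1 a b c d + g2 a b c d) M n = riemann4 g1 M n + riemann4 g2 M n.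
Proof. rewrite !riemann4_Q4. rewrite <- Q4_plus. apply Q4_ext; intros. ring. Qed.

Lemma riemann4_scal c g M n :
  riemann4 (fun a b d e => c * g a b d e) M n = c * riemann4 g M n.
Proof. rewrite !riemann4_Q4. rewrite <- Q4_scal. apply Q4_ext; intros. ring. Qed.

Lemma riemann4_const c M n : 0 < M -> riemann4 (fun _ _ _ _ => c) M n = c * (2 * M) ^ 4.
Proof.
  intro HM. rewrite riemann4_Q4. rewrite Q4_const. unfold hh.
  assert (0 < INR (S n)) by (apply INRpos; lia). field. lra.
Qed.

Definition incube (M x1 x2 x3 x4 : R) : Prop :=
  -M <= x1 <= M /\ -M <= x2 <= M /\ -M <= x3 <= M /\ -M <= x4 <= M.

Lemma riemann4_le g1 g2 M n : 0 < M ->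
  (forall x1 x2 x3 x4, incube M x1 x2 x3 x4 -> g1 x1 x2 x3 x4 <= g2 x1 x2 x3 x4) ->
  riemann4 g1 M n <= riemann4 g2 M n.
Proof.
  intros HM H. rewrite !riemann4_Q4. apply Q4_le; intros.
  apply Rmult_le_compat_r. apply pow_le. left; apply hh_pos; auto; lia.
  apply H. repeat split;
  match goal with |- context [mid M (S n) ?i] =>
    let h := fresh in assert (h := mid_in M (S n) i HM ltac:(lia)); lra end.
Qed.

Lemma riemann4_abs_le g c M n : 0 < M ->
  (forall x1 x2 x3 x4, incube M x1 x2 x3 x4 -> Rabs (g x1 x2 x3 x4) <= c) ->
  Rabs (riemann4 g M n) <= c * (2 * M) ^ 4.
Proof.
  intros HM H. rewrite riemann4_Q4.
  assert (HN : 0 < INR (S n)) by (apply INRpos; lia).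
  replace (c * (2 * M) ^ 4) with (INR (S n) ^ 4 * (c * hh M (S n) ^ 4)).
  2: { unfold hh. field. lra. }
  apply Q4_abs_bound. intros.
  rewrite Rabs_mult. rewrite (Rabs_right (hh M (S n) ^ 4)).
  2: { apply Rle_ge, pow_le. left; apply hh_pos; auto; lia. }
  apply Rmult_le_compat_r. apply pow_le. left; apply hh_pos; auto; lia.
  apply H. repeat split;
  match goal with |- context [mid M (S n) ?i] =>
    let h := fresh in assert (h := mid_in M (S n) i HM ltac:(lia)); lra end.
Qed.


Module MB2.
Import Coquelicot.Coquelicot.

Definition cont4 (g : R -> R -> R -> R -> R) (x1 x2 x3 x4 : R) : Prop :=
  forall eps, eps > 0 -> exists delta, delta > 0 /\ forall y1 y2 y3 y4,
    Rabs (y1 - x1) < delta -> Rabs (y2 - x2) < delta -> Rabs (y3 - x3) < delta -> Rabs (y4 - x4) < delta ->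
    Rabs (g y1 y2 y3 y4 - g x1 x2 x3 x4) < eps.

Definition UC (g : R -> R -> R -> R -> R) (M : R) : Prop :=
  forall eps, eps > 0 -> exists delta, delta > 0 /\ forall x1 x2 x3 x4 y1 y2 y3 y4,
    incube M x1 x2 x3 x4 -> incube M y1 y2 y3 y4 ->
    Rabs (y1 - x1) < delta -> Rabs (y2 - x2) < delta -> Rabs (y3 - x3) < delta -> Rabs (y4 - x4) < delta ->
    Rabs (g y1 y2 y3 y4 - g x1 x2 x3 x4) < eps.

Lemma UC_of_cont g M : (forall x1 x2 x3 x4, cont4 g x1 x2 x3 x4) -> UC g M.
Proof.
  intros Hc eps Heps.
  assert (H' : forall t : Compactness.Tn 4 R, exists d : posreal,
    let '(t1, (t2, (t3, (t4, _)))) := t in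
    forall y1 y2 y3 y4,
    Rabs (y1 - t1) < 2 * d -> Rabs (y2 - t2) < 2 * d -> Rabs (y3 - t3) < 2 * d -> Rabs (y4 - t4) < 2 * d ->
    Rabs (g y1 y2 y3 y4 - g t1 t2 t3 t4) < eps / 2).
  { intros [t1 [t2 [t3 [t4 []]]]].
    destruct (Hc t1 t2 t3 t4 (eps/2)) as [d [Hd H]]; [lra|].
    assert (Hd2 : 0 < d / 2) by lra. exists (mkposreal _ Hd2). simpl.
    intros. apply H; lra. }
  set (delta := fun t => proj1_sig (constructive_indefinite_description _ (H' t))).
  assert (Hdelta : forall t, let '(t1, (t2, (t3, (t4, _)))) := t in
    forall y1 y2 y3 y4,
    Rabs (y1 - t1) < 2 * delta t -> Rabs (y2 - t2) < 2 * delta t -> Rabs (y3 - t3) < 2 * delta t -> Rabs (y4 - t4) < 2 * delta t ->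
    Rabs (g y1 y2 y3 y4 - g t1 t2 t3 t4) < eps / 2).
  { intro t. unfold delta. destruct (constructive_indefinite_description _ (H' t)) as [d Hd]. simpl. exact Hd. }
  destruct (compactness_value 4 (-M, (-M, (-M, (-M, tt)))) (M, (M, (M, (M, tt)))) delta) as [d Hd].
  exists d. split; [apply cond_pos|].
  intros x1 x2 x3 x4 y1 y2 y3 y4 Hx Hy H1 H2 H3 H4.
  specialize (Hd (x1, (x2, (x3, (x4, tt))))).
  apply NNPP. intro Hn. apply Hd.
  { unfold incube in Hx; simpl; tauto. }
  intros [[t1 [t2 [t3 [t4 []]]]] [Ht [Hcl Hle]]]. apply Hn.
  specialize (Hdelta (t1, (t2, (t3, (t4, tt))))). simpl in Hdelta, Hcl.
  destruct Hcl as [C1 [C2 [C3 [C4 _]]]].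
  pose proof (cond_pos (delta (t1, (t2, (t3, (t4, tt)))))) as Hdp.
  set (D := pos (delta (t1, (t2, (t3, (t4, tt)))))) in *. set (dd := pos d) in *.
  assert (Hle' : dd <= D) by exact Hle.
  assert (A1 := Hdelta x1 x2 x3 x4 ltac:(lra) ltac:(lra) ltac:(lra) ltac:(lra)).
  assert (A2 : Rabs (g y1 y2 y3 y4 - g t1 t2 t3 t4) < eps / 2).
  { apply Hdelta.
    - replace (y1 - t1) with ((y1 - x1) + (x1 - t1)) by ring.
      eapply Rle_lt_trans; [apply Rabs_triang|]. lra.
    - replace (y2 - t2) with ((y2 - x2) + (x2 - t2)) by ring.
      eapply Rle_lt_trans; [apply Rabs_triang|]. lra.
    - replace (y3 - t3) with ((y3 - x3) + (x3 - t3)) by ring.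
      eapply Rle_lt_trans; [apply Rabs_triang|]. lra.
    - replace (y4 - t4) with ((y4 - x4) + (x4 - t4)) by ring.
      eapply Rle_lt_trans; [apply Rabs_triang|]. lra. }
  replace (g y1 y2 y3 y4 - g x1 x2 x3 x4) with ((g y1 y2 y3 y4 - g t1 t2 t3 t4) - (g x1 x2 x3 x4 - g t1 t2 t3 t4)) by ring.
  eapply Rle_lt_trans; [apply Rabs_triang|]. rewrite Rabs_Ropp. lra.
Qed.

End MB2.
Import MB2.

Definition RS (g : R -> R -> R -> R -> R) M N :=
  Q4 N (fun i1 i2 i3 i4 => g (mid M N i1) (mid M N i2) (mid M N i3) (mid M N i4) * hh M N ^ 4).

Lemma riemann4_RS g M n : riemann4 g M n = RS g M (S n).
Proof. apply riemann4_Q4. Qed.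

Lemma Q4_minus N F G : Q4 N (fun a b c d => F a b c d - G a b c d) = Q4 N F - Q4 N G.
Proof.
  replace (Q4 N F - Q4 N G) with (Q4 N F + (-1) * Q4 N G) by ring.
  rewrite <- Q4_scal, <- Q4_plus. apply Q4_ext; intros; ring.
Qed.

Lemma mid_refine M N K a b : 0 < M -> (0 < N)%nat -> (b < K)%nat ->
  Rabs (mid M (N * K) (a * K + b) - mid M N a) < hh M N / 2.
Proof.
  intros HM HN HbK.
  assert (HK : (0 < K)%nat) by lia.
  assert (HNr : 0 < INR N) by (apply INRpos; auto).
  assert (HKr : 0 < INR K) by (apply INRpos; auto).
  assert (Hb : INR b + 1 <= INR K) by (rewrite <- S_INR; apply le_INR; lia).
  assert (Hb0 : 0 <= INR b) by apply pos_INR.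
  unfold mid, hh. rewrite mult_INR, plus_INR, mult_INR.
  replace (- M + (INR a * INR K + INR b + / 2) * (2 * M / (INR N * INR K)) -
     (- M + (INR a + / 2) * (2 * M / INR N)))
    with ((2 * M / (INR N * INR K)) * (INR b + / 2 - INR K / 2)) by (field; lra).
  rewrite Rabs_mult. rewrite Rabs_right by (left; apply Rdiv_lt_0_compat; nra).
  apply Rle_lt_trans with ((2 * M / (INR N * INR K)) * ((INR K - 1)/2)).
  - apply Rmult_le_compat_l. left; apply Rdiv_lt_0_compat; nra.
    apply Rabs_le. split; lra.
  - replace (2 * M / INR N / 2) with ((2 * M / (INR N * INR K)) * (INR K / 2)) by (field; lra).
    apply Rmult_lt_compat_l. apply Rdiv_lt_0_compat; nra. lra.
Qed.

Lemma RS_refine g M N K eps delta : 0 < M -> (0 < N)%nat -> (0 < K)%nat -> 0 < eps ->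
  (forall x1 x2 x3 x4 y1 y2 y3 y4,
    incube M x1 x2 x3 x4 -> incube M y1 y2 y3 y4 ->
    Rabs (y1 - x1) < delta -> Rabs (y2 - x2) < delta -> Rabs (y3 - x3) < delta -> Rabs (y4 - x4) < delta ->
    Rabs (g y1 y2 y3 y4 - g x1 x2 x3 x4) < eps) ->
  hh M N / 2 <= delta ->
  Rabs (RS g M (N * K) - RS g M N) <= eps * (2 * M) ^ 4.
Proof.
  intros HM HN HK Heps Hg Hh.
  assert (HNr : 0 < INR N) by (apply INRpos; auto).
  assert (HKr : 0 < INR K) by (apply INRpos; auto).
  assert (EK : hh M (N * K) = hh M N / INR K) by (unfold hh; rewrite mult_INR; field; lra).
  assert (Hhp : 0 < hh M N) by (apply hh_pos; auto).
  unfold RS at 1. rewrite Q4_refine.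
  unfold RS.
  assert (E : Q4 N (fun i1 i2 i3 i4 => g (mid M N i1) (mid M N i2) (mid M N i3) (mid M N i4) * hh M N ^ 4)
    = Q4 N (fun a1 a2 a3 a4 => Q4 K (fun _ _ _ _ => g (mid M N a1) (mid M N a2) (mid M N a3) (mid M N a4) * hh M (N*K) ^ 4))).
  { apply Q4_ext; intros. rewrite Q4_const, EK. field. lra. }
  rewrite E, <- Q4_minus.
  replace (eps * (2 * M) ^ 4) with (INR N ^ 4 * (INR K ^ 4 * (eps * hh M (N * K) ^ 4))).
  2: { rewrite EK. unfold hh. field. lra. }
  apply Q4_abs_bound. intros a1 a2 a3 a4 Ha1 Ha2 Ha3 Ha4.
  rewrite <- Q4_minus. apply Q4_abs_bound. intros b1 b2 b3 b4 Hb1 Hb2 Hb3 Hb4.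
  rewrite <- Rmult_minus_distr_r, Rabs_mult.
  rewrite (Rabs_right (hh M (N * K) ^ 4)).
  2: { apply Rle_ge, pow_le. rewrite EK. left; apply Rdiv_lt_0_compat; lra. }
  apply Rmult_le_compat_r. apply pow_le. rewrite EK. left; apply Rdiv_lt_0_compat; lra.
  left. apply Hg.
  - repeat split;
    match goal with |- context [mid M N ?i] =>
      let h := fresh in assert (h := mid_in M N i HM ltac:(lia)); lra end.
  - repeat split;
    match goal with |- context [mid M (N*K) ?i] =>
      let h := fresh in assert (h := mid_in M (N*K) i HM ltac:(nia)); lra end.
  - eapply Rlt_le_trans; [apply mid_refine; auto|lra].
  - eapply Rlt_le_trans; [apply mid_refine; auto|lra].
  - eapply Rlt_le_trans; [apply mid_refine; auto|lra].
  - eapply Rlt_le_trans; [apply mid_refine; auto|lra].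
Qed.

Lemma riemann_conv g M : 0 < M -> UC g M -> exists I, Un_cv (riemann4 g M) I.
Proof.
  intros HM Hg.
  assert (HC : Cauchy_crit (riemann4 g M)).
  { intros eps Heps.
    set (e1 := eps / (3 * (2 * M) ^ 4)).
    assert (Hp : 0 < (2 * M) ^ 4) by (apply pow_lt; lra).
    assert (He1 : 0 < e1) by (apply Rdiv_lt_0_compat; lra).
    destruct (Hg e1 He1) as [d [Hd Hgd]].
    destruct (INR_archimed d (2 * M) Hd) as [N0 HN0].
    exists N0. intros n m Hn Hm. unfold R_dist. rewrite !riemann4_RS.
    assert (Hhn : forall k, (k >= N0)%nat -> hh M (S k) / 2 <= d).
    { intros k Hk. unfold hh.
      assert (INR N0 <= INR (S k)) by (apply le_INR; lia).
      assert (0 < INR (S k)) by (apply INRpos; lia).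
      apply Rmult_le_reg_r with (2 * INR (S k)); [lra|].
      replace (2 * M / INR (S k) / 2 * (2 * INR (S k))) with (2 * M) by (field; lra).
      nra. }
    pose proof (RS_refine g M (S n) (S m) e1 d HM ltac:(lia) ltac:(lia) He1 Hgd (Hhn n Hn)) as R1.
    pose proof (RS_refine g M (S m) (S n) e1 d HM ltac:(lia) ltac:(lia) He1 Hgd (Hhn m Hm)) as R2.
    rewrite Nat.mul_comm in R2.
    replace (RS g M (S n) - RS g M (S m)) with
      (- (RS g M (S n * S m) - RS g M (S n)) + (RS g M (S n * S m) - RS g M (S m))) by ring.
    eapply Rle_lt_trans; [apply Rabs_triang|]. rewrite Rabs_Ropp.
    assert (e1 * (2 * M) ^ 4 = eps / 3) by (unfold e1; field; lra). lra. }
  destruct (R_complete _ HC) as [I HI]. exists I; auto.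
Qed.


Lemma Q4_swap34 N F : Q4 N (fun a b c d => F a b d c) = Q4 N F.
Proof. unfold Q4. apply sumN_ext; intros. apply sumN_ext; intros. apply sumN_swap. Qed.
Lemma Q4_swap23 N F : Q4 N (fun a b c d => F a c b d) = Q4 N F.
Proof. unfold Q4. apply sumN_ext; intros. apply sumN_swap. Qed.
Lemma Q4_swap12 N F : Q4 N (fun a b c d => F b a c d) = Q4 N F.
Proof. unfold Q4. apply sumN_swap. Qed.

Lemma riemann4_swap34 g M n : riemann4 (fun a b c d => g a b d c) M n = riemann4 g M n.
Proof. rewrite !riemann4_Q4. rewrite <- Q4_swap34. apply Q4_ext; intros; reflexivity. Qed.
Lemma riemann4_swap23 g M n : riemann4 (fun a b c d => g a c b d) M n = riemann4 g M n.
Proof. rewrite !riemann4_Q4. rewrite <- Q4_swap23. apply Q4_ext; intros; reflexivity. Qed.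
Lemma riemann4_swap12 g M n : riemann4 (fun a b c d => g b a c d) M n = riemann4 g M n.
Proof. rewrite !riemann4_Q4. rewrite <- Q4_swap12. apply Q4_ext; intros; reflexivity. Qed.

Definition Q3 (N : nat) (F : nat -> nat -> nat -> R) : R :=
  sumN (fun i1 => sumN (fun i2 => sumN (fun i3 => F i1 i2 i3) N) N) N.

Lemma Q3_abs_bound N F c : (forall i1 i2 i3, (i1 < N)%nat -> (i2 < N)%nat -> (i3 < N)%nat ->
  Rabs (F i1 i2 i3) <= c) -> Rabs (Q3 N F) <= INR N ^ 3 * c.
Proof.
  intro H. unfold Q3. eapply Rle_trans; [apply sumN_abs|].
  replace (INR N ^ 3 * c) with (sumN (fun _ => INR N ^ 2 * c) N) by (rewrite sumN_const; ring).
  apply sumN_le; intros.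
  eapply Rle_trans; [apply sumN_abs|].
  replace (INR N ^ 2 * c) with (sumN (fun _ => INR N * c) N) by (rewrite sumN_const; ring).
  apply sumN_le; intros.
  eapply Rle_trans; [apply sumN_abs|].
  replace (INR N * c) with (sumN (fun _ => c) N) by (rewrite sumN_const; ring).
  apply sumN_le; intros. auto.
Qed.

Definition edge (M : R) (N i : nat) : R := - M + INR i * hh M N.

Lemma div4 G G' M : 0 < M ->
  (forall x1 x2 x3 x4, incube M x1 x2 x3 x4 ->
     derivable_pt_lim (fun s => G x1 x2 x3 s) x4 (G' x1 x2 x3 x4)) ->
  (forall x1 x2 x3, incube M x1 x2 x3 M -> G x1 x2 x3 M = 0 /\ G x1 x2 x3 (-M) = 0) ->
  UC G' M -> Un_cv (riemann4 G' M) 0.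
Proof.
  intros HM HD HB HU eps Heps.
  assert (Hp : 0 < (2 * M) ^ 4) by (apply pow_lt; lra).
  set (e1 := eps / (2 * (2 * M) ^ 4)).
  assert (He1 : 0 < e1) by (apply Rdiv_lt_0_compat; lra).
  destruct (HU e1 He1) as [d [Hd Hgd]].
  destruct (INR_archimed d (2 * M) Hd) as [N0 HN0].
  exists N0. intros n Hn. unfold R_dist. rewrite Rminus_0_r, riemann4_RS.
  set (N := S n). set (h := hh M N).
  assert (HNr : 0 < INR N) by (apply INRpos; lia).
  assert (Hh : 0 < h) by (apply hh_pos; auto; lia).
  assert (HhN : INR N * h = 2 * M) by (unfold h, hh; field; lra).
  assert (Hhd : h < d).
  { assert (INR N0 <= INR N) by (apply le_INR; unfold N; lia).
    apply Rmult_lt_reg_l with (INR N); [lra|]. rewrite HhN. nra. }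
  assert (Emid : forall i, mid M N i = edge M N i + h / 2) by (intro; unfold mid, edge; fold h; field).
  assert (Eedge : forall i, edge M N (S i) = edge M N i + h) by (intro; unfold edge; rewrite S_INR; fold h; ring).
  assert (HeN : edge M N N = M) by (unfold edge; fold h; lra).
  assert (He0 : edge M N 0 = - M) by (unfold edge; simpl; ring).
  assert (Hein : forall i, (i <= N)%nat -> - M <= edge M N i <= M).
  { intros i Hi. unfold edge. fold h. assert (0 <= INR i) by apply pos_INR.
    assert (INR i <= INR N) by (apply le_INR; auto). split; nra. }
  unfold RS. fold h.
  change (Q4 N ?F) with (Q3 N (fun i1 i2 i3 => sumN (F i1 i2 i3) N)).
  apply Rle_lt_trans with (INR N ^ 3 * (h ^ 3 * (INR N * h * e1))).
  2: { replace (INR N ^ 3 * (h ^ 3 * (INR N * h * e1))) with ((INR N * h) ^ 4 * e1) by ring.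
       rewrite HhN. unfold e1.
       replace ((2 * M) ^ 4 * (eps / (2 * (2 * M) ^ 4))) with (eps / 2) by (field; lra). lra. }
  apply Q3_abs_bound. intros i1 i2 i3 Hi1 Hi2 Hi3.
  assert (Hy1 := mid_in M N i1 HM Hi1). assert (Hy2 := mid_in M N i2 HM Hi2).
  assert (Hy3 := mid_in M N i3 HM Hi3).
  set (y1 := mid M N i1) in *. set (y2 := mid M N i2) in *. set (y3 := mid M N i3) in *.
  assert (Htel : sumN (fun i => G y1 y2 y3 (edge M N (S i)) - G y1 y2 y3 (edge M N i)) N = 0).
  { rewrite (sumN_tele (fun i => G y1 y2 y3 (edge M N i))). rewrite HeN, He0.
    destruct (HB y1 y2 y3) as [B1 B2]. unfold incube; repeat split; lra. rewrite B1, B2; ring. }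
  replace (sumN (fun i4 => G' y1 y2 y3 (mid M N i4) * h ^ 4) N) with
    (h ^ 3 * sumN (fun i4 => G' y1 y2 y3 (mid M N i4) * h - (G y1 y2 y3 (edge M N (S i4)) - G y1 y2 y3 (edge M N i4))) N).
  2: { rewrite sumN_minus, Htel, Rminus_0_r, <- sumN_scal. apply sumN_ext; intros. ring. }
  rewrite Rabs_mult. rewrite Rabs_right by (apply Rle_ge, pow_le; lra).
  apply Rmult_le_compat_l; [apply pow_le; lra|].
  eapply Rle_trans; [apply sumN_abs|].
  replace (INR N * h * e1) with (sumN (fun _ => h * e1) N) by (rewrite sumN_const; ring).
  apply sumN_le. intros i4 Hi4.
  assert (Hi4' := Hein i4 ltac:(lia)). assert (Hi4'' := Hein (S i4) ltac:(lia)).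
  rewrite Eedge in Hi4'' |- *.
  destruct (MVT_cor2 (fun s => G y1 y2 y3 s) (fun s => G' y1 y2 y3 s) (edge M N i4) (edge M N i4 + h))
    as [xi [Exi Hxi]]; [lra| |].
  { intros c Hc. apply HD. unfold incube; repeat split; lra. }
  rewrite Exi. replace (edge M N i4 + h - edge M N i4) with h by ring.
  replace (G' y1 y2 y3 (mid M N i4) * h - G' y1 y2 y3 xi * h) with
    (h * (G' y1 y2 y3 (mid M N i4) - G' y1 y2 y3 xi)) by ring.
  rewrite Rabs_mult, Rabs_right by lra. apply Rmult_le_compat_l; [lra|]. left.
  rewrite Emid. apply Hgd.
  - unfold incube; repeat split; lra.
  - unfold incube; repeat split; lra.
  - rewrite Rminus_diag, Rabs_R0; lra.
  - rewrite Rminus_diag, Rabs_R0; lra.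
  - rewrite Rminus_diag, Rabs_R0; lra.
  - apply Rabs_def1; lra.
Qed.


Definition ind (a b x : R) : R :=
  if Rlt_dec a x then if Rlt_dec x b then 1 else 0 else 0.

Lemma ind_range a b x : 0 <= ind a b x <= 1.
Proof. unfold ind; destruct Rlt_dec; try destruct Rlt_dec; lra. Qed.

Lemma count_lemma c h a b k : 0 < h -> c - h <= a ->
  h * sumN (fun i => ind a b (c + INR i * h)) k >= Rmin b (c + INR k * h) - a - h.
Proof.
  intros Hh Ha. induction k.
  - simpl. unfold Rmin; destruct Rle_dec; lra.
  - simpl sumN. rewrite S_INR.
    assert (Hs : 0 <= sumN (fun i => ind a b (c + INR i * h)) k).
    { apply sumN_nonneg. intros; apply ind_range. }
    unfold ind at 2.
    destruct (Rlt_dec a (c + INR k * h)) as [H1|H1];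
    [destruct (Rlt_dec (c + INR k * h) b) as [H2|H2]|].
    + revert IHk. unfold Rmin; repeat destruct Rle_dec; nra.
    + revert IHk. unfold Rmin; repeat destruct Rle_dec; nra.
    + unfold Rmin; repeat destruct Rle_dec; nra.
Qed.

Lemma Q4_prod N f1 f2 f3 f4 :
  Q4 N (fun i1 i2 i3 i4 => f1 i1 * f2 i2 * f3 i3 * f4 i4) = sumN f1 N * sumN f2 N * sumN f3 N * sumN f4 N.
Proof.
  unfold Q4.
  transitivity (sumN (fun i1 => f1 i1 * (sumN f2 N * sumN f3 N * sumN f4 N)) N).
  { apply sumN_ext; intros i1 _.
    transitivity (sumN (fun i2 => (f1 i1 * f2 i2) * (sumN f3 N * sumN f4 N)) N).
    { apply sumN_ext; intros i2 _.
      transitivity (sumN (fun i3 => (f1 i1 * f2 i2 * f3 i3) * sumN f4 N) N).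
      { apply sumN_ext; intros i3 _. rewrite <- sumN_scal. reflexivity. }
      rewrite (sumN_ext _ (fun i3 => (f1 i1 * f2 i2 * sumN f4 N) * f3 i3)) by (intros; ring).
      rewrite sumN_scal. ring. }
    rewrite (sumN_ext _ (fun i2 => (f1 i1 * (sumN f3 N * sumN f4 N)) * f2 i2)) by (intros; ring).
    rewrite sumN_scal. ring. }
  rewrite (sumN_ext _ (fun i1 => (sumN f2 N * sumN f3 N * sumN f4 N) * f1 i1)) by (intros; ring).
  rewrite sumN_scal. ring.
Qed.

Lemma riemann_pos w M0 x1 x2 x3 x4 : 0 < M0 ->
  (forall y1 y2 y3 y4, 0 <= w y1 y2 y3 y4) ->
  cont4 w x1 x2 x3 x4 ->
  Rabs x1 < M0 -> Rabs x2 < M0 -> Rabs x3 < M0 -> Rabs x4 < M0 ->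
  w x1 x2 x3 x4 > 0 ->
  exists c, c > 0 /\ forall M, M0 <= M -> exists N0, forall n, (n >= N0)%nat -> riemann4 w M n >= c.
Proof.
  intros HM0 Hnn Hc H1' H2' H3' H4' Hw.
  set (c0 := w x1 x2 x3 x4 / 2).
  destruct (Hc c0) as [d [Hd Hcd]]; [unfold c0; lra|].
  set (r := Rmin (Rmin d (Rmin (M0 - Rabs x1) (M0 - Rabs x2))) (Rmin (M0 - Rabs x3) (M0 - Rabs x4)) / 2).
  assert (Hr : 0 < r).
  { unfold r. apply Rdiv_lt_0_compat; [|lra].
    repeat apply Rmin_pos; lra. }
  assert (Hrd : r < d).
  { unfold r. assert (Rmin (Rmin d (Rmin (M0 - Rabs x1) (M0 - Rabs x2))) (Rmin (M0 - Rabs x3) (M0 - Rabs x4)) <= d).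
    { eapply Rle_trans; [apply Rmin_l|apply Rmin_l]. } lra. }
  assert (Hr1 : r < M0 - Rabs x1).
  { unfold r. assert (Rmin (Rmin d (Rmin (M0 - Rabs x1) (M0 - Rabs x2))) (Rmin (M0 - Rabs x3) (M0 - Rabs x4)) <= M0 - Rabs x1).
    { eapply Rle_trans; [apply Rmin_l|]. eapply Rle_trans; [apply Rmin_r|apply Rmin_l]. } lra. }
  assert (Hr2 : r < M0 - Rabs x2).
  { unfold r. assert (Rmin (Rmin d (Rmin (M0 - Rabs x1) (M0 - Rabs x2))) (Rmin (M0 - Rabs x3) (M0 - Rabs x4)) <= M0 - Rabs x2).
    { eapply Rle_trans; [apply Rmin_l|]. eapply Rle_trans; [apply Rmin_r|apply Rmin_r]. } lra. }
  assert (Hr3 : r < M0 - Rabs x3).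
  { unfold r. assert (Rmin (Rmin d (Rmin (M0 - Rabs x1) (M0 - Rabs x2))) (Rmin (M0 - Rabs x3) (M0 - Rabs x4)) <= M0 - Rabs x3).
    { eapply Rle_trans; [apply Rmin_r|apply Rmin_l]. } lra. }
  assert (Hr4 : r < M0 - Rabs x4).
  { unfold r. assert (Rmin (Rmin d (Rmin (M0 - Rabs x1) (M0 - Rabs x2))) (Rmin (M0 - Rabs x3) (M0 - Rabs x4)) <= M0 - Rabs x4).
    { eapply Rle_trans; [apply Rmin_r|apply Rmin_r]. } lra. }
  exists (c0 * r ^ 4). split. { apply Rmult_lt_0_compat; [unfold c0; lra| apply pow_lt; lra]. }
  intros M HMM. assert (HM : 0 < M) by lra.
  assert (H1 : Rabs x1 < M) by lra. assert (H2 : Rabs x2 < M) by lra.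
  assert (H3 : Rabs x3 < M) by lra. assert (H4 : Rabs x4 < M) by lra.
  assert (Hr1' : r < M - Rabs x1) by lra. assert (Hr2' : r < M - Rabs x2) by lra.
  assert (Hr3' : r < M - Rabs x3) by lra. assert (Hr4' : r < M - Rabs x4) by lra.
  destruct (INR_archimed r (2 * M) Hr) as [N0 HN0].
  exists N0. intros n Hn. rewrite riemann4_RS. set (N := S n).
  assert (HNr : 0 < INR N) by (apply INRpos; lia).
  set (h := hh M N).
  assert (Hh : 0 < h) by (apply hh_pos; auto; lia).
  assert (HhN : INR N * h = 2 * M) by (unfold h, hh; field; lra).
  assert (Hhr : h <= r).
  { assert (INR N0 <= INR N) by (apply le_INR; unfold N; lia).
    apply Rmult_le_reg_l with (INR N); [lra|]. rewrite HhN. nra. }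
  set (cc := - M + h / 2).
  assert (Emid : forall i, mid M N i = cc + INR i * h) by (intro; unfold mid, cc, h; field).
  set (b1 := fun i => ind (x1 - r) (x1 + r) (mid M N i) * h).
  set (b2 := fun i => ind (x2 - r) (x2 + r) (mid M N i) * h).
  set (b3 := fun i => ind (x3 - r) (x3 + r) (mid M N i) * h).
  set (b4 := fun i => ind (x4 - r) (x4 + r) (mid M N i) * h).
  assert (Hb : forall x, Rabs x < M -> r < M - Rabs x -> sumN (fun i => ind (x - r) (x + r) (mid M N i) * h) N >= r).
  { intros x Hx Hxr.
    rewrite (sumN_ext _ (fun i => h * ind (x - r) (x + r) (cc + INR i * h))).
    2: { intros; rewrite Emid; ring. }
    rewrite sumN_scal.
    assert (Hx' := Rabs_def2 x M Hx).
    assert (cc - h <= x - r). { unfold cc. apply Rabs_def2 in Hx. 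
      assert (Hq : Rabs x < M - r) by lra. apply Rabs_def2 in Hq. lra. }
    pose proof (count_lemma cc h (x - r) (x + r) N Hh H).
    assert (Rmin (x + r) (cc + INR N * h) = x + r).
    { apply Rmin_left. unfold cc. assert (Hq : Rabs x < M - r) by lra. apply Rabs_def2 in Hq. lra. }
    lra. }
  apply Rle_ge. apply Rle_trans with (c0 * (sumN b1 N * sumN b2 N * sumN b3 N * sumN b4 N)).
  { assert (S1 := Hb x1 H1 Hr1'). assert (S2 := Hb x2 H2 Hr2').
    assert (S3 := Hb x3 H3 Hr3'). assert (S4 := Hb x4 H4 Hr4').
    fold b1 b2 b3 b4 in S1, S2, S3, S4.
    apply Rmult_le_compat_l; [unfold c0; lra|].
    assert (0 <= r ^ 2) by (apply pow_le; lra).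
    replace (r ^ 4) with (r * r * r * r) by ring.
    repeat apply Rmult_le_compat; try lra; try (apply Rmult_le_pos); try lra. }
  rewrite <- Q4_prod, <- Q4_scal. unfold RS; fold h. apply Q4_le. intros i1 i2 i3 i4 Hi1 Hi2 Hi3 Hi4.
  unfold b1, b2, b3, b4.
  assert (M1 := mid_in M N i1 HM Hi1). assert (M2 := mid_in M N i2 HM Hi2).
  assert (M3 := mid_in M N i3 HM Hi3). assert (M4 := mid_in M N i4 HM Hi4).
  set (y1 := mid M N i1) in *. set (y2 := mid M N i2) in *.
  set (y3 := mid M N i3) in *. set (y4 := mid M N i4) in *.
  replace (c0 * (ind (x1 - r) (x1 + r) y1 * h * (ind (x2 - r) (x2 + r) y2 * h) *
      (ind (x3 - r) (x3 + r) y3 * h) * (ind (x4 - r) (x4 + r) y4 * h)))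
    with ((c0 * (ind (x1 - r) (x1 + r) y1 * ind (x2 - r) (x2 + r) y2 *
      ind (x3 - r) (x3 + r) y3 * ind (x4 - r) (x4 + r) y4)) * h ^ 4) by ring.
  apply Rmult_le_compat_r; [apply pow_le; lra|].
  assert (Hy : 0 <= w y1 y2 y3 y4) by apply Hnn.
  unfold ind.
  destruct (Rlt_dec (x1 - r) y1); [destruct (Rlt_dec y1 (x1 + r))|]; try lra;
  destruct (Rlt_dec (x2 - r) y2); [destruct (Rlt_dec y2 (x2 + r))|]; try lra;
  destruct (Rlt_dec (x3 - r) y3); [destruct (Rlt_dec y3 (x3 + r))|]; try lra;
  destruct (Rlt_dec (x4 - r) y4); [destruct (Rlt_dec y4 (x4 + r))|]; try lra.
  assert (Hwy : Rabs (w y1 y2 y3 y4 - w x1 x2 x3 x4) < c0).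
  { apply Hcd; apply Rabs_def1; lra. }
  apply Rabs_def2 in Hwy. unfold c0 in *. lra.
Qed.


Lemma glue (f g h : R -> R) a l d : 0 < d ->
  (forall x, a - d < x <= a -> h x = f x) -> (forall x, a <= x < a + d -> h x = g x) ->
  derivable_pt_lim f a l -> derivable_pt_lim g a l -> derivable_pt_lim h a l.
Proof.
  intros Hd Hf Hg Df Dg eps Heps.
  destruct (Df eps Heps) as [d1 H1]. destruct (Dg eps Heps) as [d2 H2].
  assert (Hd' : 0 < Rmin d (Rmin d1 d2)) by (apply Rmin_pos; [auto|apply Rmin_pos; apply cond_pos]).
  exists (mkposreal _ Hd'). intros k Hk Hkd. simpl in Hkd.
  assert (Hk0 : Rabs k < d) by (eapply Rlt_le_trans; [exact Hkd| apply Rmin_l]).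
  assert (Hk12 : Rabs k < Rmin d1 d2) by (eapply Rlt_le_trans; [exact Hkd| apply Rmin_r]).
  assert (Hk1 : Rabs k < d1) by (eapply Rlt_le_trans; [exact Hk12| apply Rmin_l]).
  assert (Hk2 : Rabs k < d2) by (eapply Rlt_le_trans; [exact Hk12| apply Rmin_r]).
  apply Rabs_def2 in Hk0.
  destruct (Rle_dec k 0).
  - rewrite (Hf (a + k)), (Hf a) by lra. apply H1; auto.
  - rewrite (Hg (a + k)), (Hg a) by lra. apply H2; auto.
Qed.

Lemma loc (f h : R -> R) x l d : 0 < d ->
  (forall y, Rabs (y - x) < d -> h y = f y) -> derivable_pt_lim f x l -> derivable_pt_lim h x l.
Proof.
  intros Hd Hfh Df eps Heps.
  destruct (Df eps Heps) as [d1 H1].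
  assert (Hd' : 0 < Rmin d1 d) by (apply Rmin_pos; [apply cond_pos|auto]).
  exists (mkposreal _ Hd'). intros k Hk Hkd. simpl in Hkd.
  assert (Hk1 : Rabs k < d1) by (eapply Rlt_le_trans; [exact Hkd| apply Rmin_l]).
  assert (Hk2 : Rabs k < d) by (eapply Rlt_le_trans; [exact Hkd| apply Rmin_r]).
  rewrite (Hfh (x + k)), (Hfh x).
  - apply H1; auto.
  - rewrite Rminus_diag, Rabs_R0; auto.
  - replace (x + k - x) with k by ring; auto.
Qed.

Definition mm (t : R) : R := Rmax 0 (Rmin (t - 1) (2 - t)).
Definition deta (t : R) : R := -4 * mm t.
Definition etac (t : R) : R :=
  if Rle_dec t 1 then 1 else if Rle_dec t (3/2) then 1 - 2 * (t - 1) ^ 2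
  else if Rle_dec t 2 then 2 * (2 - t) ^ 2 else 0.

Lemma mm_lip t u : Rabs (mm t - mm u) <= Rabs (t - u).
Proof.
  unfold mm, Rmax, Rmin. repeat destruct Rle_dec;
  unfold Rabs; repeat destruct Rcase_abs; lra.
Qed.

Lemma mm_range t : 0 <= mm t <= / 2.
Proof. unfold mm, Rmax, Rmin. repeat destruct Rle_dec; lra. Qed.

Lemma mm_zero t : t <= 1 \/ 2 <= t -> mm t = 0.
Proof. intro H. unfold mm, Rmax, Rmin. repeat destruct Rle_dec; lra. Qed.

Lemma deta_cont t : continuity_pt deta t.
Proof.
  intros e He. exists (e / 4). split; [lra|]. intros x [_ Hx]. simpl in *. unfold R_dist in *.
  unfold deta. replace (-4 * mm x - -4 * mm t) with (-4 * (mm x - mm t)) by ring.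
  rewrite Rabs_mult. rewrite Rabs_left by lra.
  pose proof (mm_lip x t). lra.
Qed.

Lemma etac_range t : 0 <= etac t <= 1.
Proof.
  unfold etac. repeat destruct Rle_dec; try lra.
  - split; [|nra]. assert ((t-1)^2 <= /4) by nra. lra.
  - split; [nra|]. assert ((2-t)^2 <= /4) by nra. lra.
Qed.

Lemma etac_one t : t <= 1 -> etac t = 1.
Proof. intro. unfold etac. destruct Rle_dec; lra. Qed.
Lemma etac_zero t : 2 <= t -> etac t = 0.
Proof. intro. unfold etac. repeat destruct Rle_dec; try lra. assert (t = 2) by lra. subst. ring. Qed.

Lemma d_const c x : derivable_pt_lim (fun _ => c) x 0.
Proof. apply derivable_pt_lim_const. Qed.

Lemma d_q1 x : derivable_pt_lim (fun t => 1 - 2 * (t - 1) ^ 2) x (-4 * (x - 1)).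
Proof.
  assert (H := derivable_pt_lim_minus (fun _ => 1) (fun t => 2 * (t - 1) ^ 2) x 0 (2 * (2 * (x - 1)))).
  eapply derivable_pt_lim_ext; [| replace (-4 * (x - 1)) with (0 - 2 * (2 * (x - 1))) by ring; apply H].
  - intro; reflexivity.
  - apply derivable_pt_lim_const.
  - apply derivable_pt_lim_scal.
    replace (2 * (x - 1)) with (INR 2 * (x - 1) ^ (2 - 1) * 1) by (simpl; ring).
    apply (derivable_pt_lim_comp (fun t => t - 1) (fun t => t ^ 2)).
    + replace 1 with (1 - 0) by ring. apply derivable_pt_lim_minus; [apply derivable_pt_lim_id| apply derivable_pt_lim_const].
    + apply derivable_pt_lim_pow.
Qed.

Lemma d_q2 x : derivable_pt_lim (fun t => 2 * (2 - t) ^ 2) x (-4 * (2 - x)).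
Proof.
  replace (-4 * (2 - x)) with (2 * (INR 2 * (2 - x) ^ (2 - 1) * (0 - 1))) by (simpl; ring).
  apply derivable_pt_lim_scal.
  apply (derivable_pt_lim_comp (fun t => 2 - t) (fun t => t ^ 2)).
  - apply derivable_pt_lim_minus; [apply derivable_pt_lim_const| apply derivable_pt_lim_id].
  - apply derivable_pt_lim_pow.
Qed.

Lemma etac_deriv t : derivable_pt_lim etac t (deta t).
Proof.
  unfold deta.
  destruct (Rtotal_order t 1) as [H|[H|H]].
  - rewrite mm_zero by lra. replace (-4 * 0) with 0 by ring.
    apply (loc (fun _ => 1) _ t 0 (1 - t)); [lra| |apply d_const].
    intros y Hy. apply etac_one. apply Rabs_def2 in Hy. lra.
  - subst. rewrite mm_zero by lra. replace (-4 * 0) with 0 by ring.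
    apply (glue (fun _ => 1) (fun t => 1 - 2 * (t - 1) ^ 2) _ 1 0 (1/2)); [lra| | | apply d_const|].
    + intros; apply etac_one; lra.
    + intros x Hx. unfold etac. destruct (Rle_dec x 1).
      * assert (x = 1) by lra. subst. ring.
      * destruct (Rle_dec x (3/2)); [auto|lra].
    + replace 0 with (-4 * (1 - 1)) by ring. apply d_q1.
  - destruct (Rtotal_order t (3/2)) as [H2|[H2|H2]].
    + replace (mm t) with (t - 1) by (unfold mm, Rmax, Rmin; repeat destruct Rle_dec; lra).
      apply (loc (fun t => 1 - 2 * (t - 1) ^ 2) _ t _ (Rmin (t - 1) (3/2 - t))); [apply Rmin_pos; lra| |apply d_q1].
      intros y Hy. apply Rabs_def2 in Hy.
      assert (Rmin (t - 1) (3/2 - t) <= t - 1) by apply Rmin_l.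
      assert (Rmin (t - 1) (3/2 - t) <= 3/2 - t) by apply Rmin_r.
      unfold etac. repeat destruct Rle_dec; lra.
    + subst. replace (mm (3/2)) with (/2) by (unfold mm, Rmax, Rmin; repeat destruct Rle_dec; lra).
      apply (glue (fun t => 1 - 2 * (t - 1) ^ 2) (fun t => 2 * (2 - t) ^ 2) _ _ _ (1/4)); [lra| | | |].
      * intros x Hx. unfold etac. repeat destruct Rle_dec; lra.
      * intros x Hx. unfold etac. repeat destruct Rle_dec; try lra.
        assert (x = 3/2) by lra. subst. field.
      * replace (-4 * / 2) with (-4 * (3/2 - 1)) by field. apply d_q1.
      * replace (-4 * / 2) with (-4 * (2 - 3/2)) by field. apply d_q2.
    + destruct (Rtotal_order t 2) as [H3|[H3|H3]].
      * replace (mm t) with (2 - t) by (unfold mm, Rmax, Rmin; repeat destruct Rle_dec; lra).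
        apply (loc (fun t => 2 * (2 - t) ^ 2) _ t _ (Rmin (t - 3/2) (2 - t))); [apply Rmin_pos; lra| |apply d_q2].
        intros y Hy. apply Rabs_def2 in Hy.
        assert (Rmin (t - 3/2) (2 - t) <= t - 3/2) by apply Rmin_l.
        assert (Rmin (t - 3/2) (2 - t) <= 2 - t) by apply Rmin_r.
        unfold etac. repeat destruct Rle_dec; lra.
      * subst. rewrite mm_zero by lra. replace (-4 * 0) with 0 by ring.
        apply (glue (fun t => 2 * (2 - t) ^ 2) (fun _ => 0) _ _ _ (1/4)); [lra| | | |apply d_const].
        -- intros x Hx. unfold etac. repeat destruct Rle_dec; lra.
        -- intros x Hx. unfold etac. repeat destruct Rle_dec; try lra.
           assert (x = 2) by lra. subst. ring.
        -- replace 0 with (-4 * (2 - 2)) by ring. apply d_q2.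
      * rewrite mm_zero by lra. replace (-4 * 0) with 0 by ring.
        apply (loc (fun _ => 0) _ t 0 (t - 2)); [lra| |apply d_const].
        intros y Hy. apply etac_zero. apply Rabs_def2 in Hy. lra.
Qed.


Definition theta (a s : R) : R := etac (ln s / (2 * ln a)).
Definition dtheta (a s : R) : R := deta (ln s / (2 * ln a)) * / (2 * ln a * s).

Lemma ln_pos a : 1 < a -> 0 < ln a.
Proof. intro. rewrite <- ln_1. apply ln_increasing; lra. Qed.

Lemma ln_nonpos y : y < 1 -> ln y <= 0.
Proof.
  intro H. destruct (Rle_dec y 0).
  - unfold ln. case (Rlt_dec 0 y); intro; [exfalso; lra | right; reflexivity].
  - rewrite <- ln_1. left. apply ln_increasing; lra.
Qed.

Lemma ln_neg0 y : y <= 0 -> ln y = 0.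
Proof. intro H. unfold ln. case (Rlt_dec 0 y); intro; [exfalso; lra | reflexivity]. Qed.

Lemma ln_le' x y : 0 < x -> x <= y -> ln x <= ln y.
Proof. intros. destruct (Req_dec x y); [subst; lra|]. left; apply ln_increasing; lra. Qed.

Lemma arg_le a s c : 1 < a -> ln s <= c * (2 * ln a) -> ln s / (2 * ln a) <= c.
Proof.
  intros Ha H. pose proof (ln_pos a Ha).
  apply Rmult_le_reg_r with (2 * ln a); [lra|].
  unfold Rdiv. rewrite Rmult_assoc, Rinv_l by lra. lra.
Qed.

Lemma arg_ge a s c : 1 < a -> c * (2 * ln a) <= ln s -> c <= ln s / (2 * ln a).
Proof.
  intros Ha H. pose proof (ln_pos a Ha).
  apply Rmult_le_reg_r with (2 * ln a); [lra|].
  unfold Rdiv. rewrite Rmult_assoc, Rinv_l by lra. lra.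
Qed.

Lemma theta_one a s : 1 < a -> s <= a ^ 2 -> theta a s = 1.
Proof.
  intros Ha Hs. unfold theta. apply etac_one. apply arg_le; auto.
  destruct (Rle_dec s 0).
  - rewrite ln_neg0 by auto. pose proof (ln_pos a Ha). lra.
  - replace (1 * (2 * ln a)) with (INR 2 * ln a) by (simpl; ring).
    rewrite <- (ln_pow a ltac:(lra) 2). apply ln_le'; lra.
Qed.

Lemma theta_zero a s : 1 < a -> a ^ 4 <= s -> theta a s = 0.
Proof.
  intros Ha Hs. unfold theta. apply etac_zero. apply arg_ge; auto.
  assert (0 < a ^ 4) by (apply pow_lt; lra).
  replace (2 * (2 * ln a)) with (INR 4 * ln a) by (simpl; ring).
  rewrite <- ln_pow by lra. apply ln_le'; lra.
Qed.

Lemma theta_range a s : 0 <= theta a s <= 1.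
Proof. apply etac_range. Qed.

Lemma dtheta_zero a s : 1 < a -> s <= a ^ 2 -> dtheta a s = 0.
Proof.
  intros Ha Hs. unfold dtheta, deta. rewrite mm_zero. ring.
  left. apply arg_le; auto.
  destruct (Rle_dec s 0).
  - rewrite ln_neg0 by auto. pose proof (ln_pos a Ha). lra.
  - replace (1 * (2 * ln a)) with (INR 2 * ln a) by (simpl; ring).
    rewrite <- (ln_pow a ltac:(lra) 2). apply ln_le'; lra.
Qed.

Lemma dtheta_bound a s : 1 < a -> Rabs (dtheta a s * s) <= / ln a.
Proof.
  intros Ha. pose proof (ln_pos a Ha).
  destruct (Rle_dec s 0).
  - rewrite dtheta_zero; auto. rewrite Rmult_0_l, Rabs_R0. left; apply Rinv_0_lt_compat; auto.
    assert (0 <= a ^ 2) by (apply pow_le; lra). lra.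
  - unfold dtheta. replace (deta (ln s / (2 * ln a)) * / (2 * ln a * s) * s)
      with (deta (ln s / (2 * ln a)) * / (2 * ln a)) by (field; lra).
    rewrite Rabs_mult. rewrite (Rabs_right (/ (2 * ln a))) by (apply Rle_ge; left; apply Rinv_0_lt_compat; lra).
    unfold deta. rewrite Rabs_mult. pose proof (mm_range (ln s / (2 * ln a))).
    rewrite (Rabs_left (-4)) by lra. rewrite Rabs_right by lra.
    replace (/ ln a) with (2 * / (2 * ln a)) by (field; lra).
    apply Rmult_le_compat_r; [left; apply Rinv_0_lt_compat; lra|]. lra.
Qed.

Lemma theta_deriv a s : 1 < a -> derivable_pt_lim (theta a) s (dtheta a s).
Proof.
  intros Ha. pose proof (ln_pos a Ha).
  destruct (Rle_dec s 0).
  - rewrite dtheta_zero; auto; [|assert (0 <= a ^ 2) by (apply pow_le; lra); lra].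
    apply (loc (fun _ => 1) _ s 0 1); [lra| |apply derivable_pt_lim_const].
    intros y Hy. apply Rabs_def2 in Hy. apply theta_one; auto.
    assert (1 <= a ^ 2) by (replace 1 with (1 ^ 2) by ring; apply pow_incr; lra). lra.
  - unfold theta, dtheta.
    replace (deta (ln s / (2 * ln a)) * / (2 * ln a * s)) with
      (deta (ln s / (2 * ln a)) * (/ s * / (2 * ln a))) by (field; lra).
    apply (derivable_pt_lim_comp (fun s => ln s / (2 * ln a)) etac).
    + replace (/ s * / (2 * ln a)) with (/ (2 * ln a) * / s) by ring.
      eapply derivable_pt_lim_ext with (f := fun s => / (2 * ln a) * ln s).
      { intro; unfold Rdiv; ring. }
      apply derivable_pt_lim_scal. apply derivable_pt_lim_ln; lra.
    + apply etac_deriv.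
Qed.

Lemma theta_cont a s : 1 < a -> continuity_pt (theta a) s.
Proof. intro Ha. apply derivable_continuous_pt. exists (dtheta a s). apply theta_deriv; auto. Qed.

Lemma dtheta_cont a s : 1 < a -> continuity_pt (dtheta a) s.
Proof.
  intros Ha. pose proof (ln_pos a Ha).
  destruct (Rle_dec s 0).
  - intros e He. exists 1. split; [lra|]. intros y [_ Hy]. simpl in Hy. unfold R_dist in *.
    apply Rabs_def2 in Hy.
    assert (1 <= a ^ 2) by (replace 1 with (1 ^ 2) by ring; apply pow_incr; lra).
    rewrite (dtheta_zero a y), (dtheta_zero a s) by (auto; lra). simpl; unfold R_dist; rewrite Rminus_diag, Rabs_R0; lra.
  - unfold dtheta.
    assert (Hg : continuity_pt (fun s => ln s / (2 * ln a)) s).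
    { apply derivable_continuous_pt. exists (/ (2 * ln a) * / s).
      eapply derivable_pt_lim_ext with (f := fun s => / (2 * ln a) * ln s).
      { intro; unfold Rdiv; ring. }
      apply derivable_pt_lim_scal. apply derivable_pt_lim_ln; lra. }
    assert (H1 : continuity_pt (fun s => deta (ln s / (2 * ln a))) s).
    { apply (continuity_pt_comp (fun s => ln s / (2 * ln a)) deta); auto. apply deta_cont. }
    assert (H2 : continuity_pt (fun s => / (2 * ln a * s)) s).
    { change (continuity_pt (inv_fct (fun s0 => 2 * ln a * s0)) s).
      apply continuity_pt_inv; [|apply Rgt_not_eq; nra].
      apply derivable_continuous_pt. exists (2 * ln a * 1).
      apply derivable_pt_lim_scal. apply derivable_pt_lim_id. }
    change (continuity_pt (mult_fct (fun s0 => deta (ln s0 / (2 * ln a))) (fun s0 => / (2 * ln a * s0))) s).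
    apply continuity_pt_mult; auto.
Qed.


Lemma Ck_const k : forall c, Ck k (fun _ => c).
Proof.
  induction k; intro c.
  - simpl. intros p. apply cont_at_const.
  - split; [intro p; apply cont_at_const|split].
    + intros mu Hmu p. exists 0. unfold Dv. apply derivable_pt_lim_const.
    + intros mu Hmu. replace (partial mu (fun _ => c)) with (fun _ : P5 => 0); [apply IHk|].
      apply functional_extensionality; intro p. symmetry. apply partial_eq. unfold Dv. apply derivable_pt_lim_const.
Qed.

Lemma allk_const c : allk (fun _ => c).
Proof. intro k; apply Ck_const. Qed.

Lemma Dv_xc mu k p : (mu < 5)%nat -> Dv mu (xc k) p (if Nat.eqb mu k then 1 else 0).
Proof.
  intro Hmu. unfold Dv, xc.
  destruct (Nat.eqb_spec mu k) as [->|Hne].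
  - eapply derivable_pt_lim_ext; [|apply derivable_pt_lim_id].
    intro z. rewrite coord_upd by auto; reflexivity.
  - eapply derivable_pt_lim_ext; [|apply derivable_pt_lim_const].
    intro z. rewrite coord_upd_other by auto; reflexivity.
Qed.

Lemma allk_xc m : allk (xc m).
Proof.
  intro k. destruct k.
  - intro p. apply cont_at_coord.
  - split; [intro p; apply cont_at_coord|split].
    + intros mu Hmu p. eexists. apply Dv_xc; auto.
    + intros mu Hmu. replace (partial mu (xc m)) with (fun _ : P5 => if Nat.eqb mu m then 1 else 0).
      apply Ck_const.
      apply functional_extensionality; intro p. symmetry. apply partial_eq, Dv_xc; auto.
Qed.

Definition exR2 : Ex := exS4 (fun k => Mu (At (xc k)) (At (xc k))).
Definition r2 (q : P5) : R := den exR2 q.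

Lemma r2_eq q : r2 q = coord q 1 ^ 2 + coord q 2 ^ 2 + coord q 3 ^ 2 + coord q 4 ^ 2.
Proof. unfold r2, exR2, exS4, xc; simpl. ring. Qed.

Lemma allk_r2 : allk r2.
Proof. apply allk_den. unfold exR2, exS4. simpl. repeat split; apply allk_xc. Qed.

Definition chi (a : R) (q : P5) : R := theta a (r2 q).
Definition dchi (a : R) (mu : nat) (q : P5) : R := dtheta a (r2 q) * partial mu r2 q.

Lemma Dv_r2 mu p : (mu < 5)%nat -> Dv mu r2 p (partial mu r2 p).
Proof. intros. apply (Ck_Dv 0); [apply allk_r2|auto]. Qed.

Lemma Dv_chi a mu p : 1 < a -> (mu < 5)%nat -> Dv mu (chi a) p (dchi a mu p).
Proof.
  intros Ha Hmu. unfold Dv, chi, dchi.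
  pose proof (Dv_r2 mu p Hmu) as H. unfold Dv in H.

  apply (derivable_pt_lim_comp (fun s => r2 (upd p mu s)) (theta a)); auto.
  cbv beta. rewrite upd_coord by auto. apply theta_deriv; auto.
Qed.

Lemma partial_chi a mu p : 1 < a -> (mu < 5)%nat -> partial mu (chi a) p = dchi a mu p.
Proof. intros. apply partial_eq, Dv_chi; auto. Qed.

Lemma Ck1_chi a : 1 < a -> Ck 1 (chi a).
Proof.
  intro Ha. split; [|split].
  - intro p. unfold chi. apply cont_at_comp. apply theta_cont; auto.
    apply cont5_at. apply (Ck_cont 0). apply allk_r2.
  - intros mu Hmu p. eexists. apply Dv_chi; auto.
  - intros mu Hmu. replace (partial mu (chi a)) with (dchi a mu).
    + simpl. intro p. unfold dchi. apply cont_at_mult.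
      * apply cont_at_comp. apply dtheta_cont; auto. apply cont5_at. apply (Ck_cont 0). apply allk_r2.
      * apply cont5_at. apply (Ck_cont 0). apply allk_partial; auto. apply allk_r2.
    + apply functional_extensionality; intro p. symmetry. apply partial_chi; auto.
Qed.

Lemma partial_r2 j q : (1 <= j <= 4)%nat -> partial j r2 q = 2 * coord q j.
Proof.
  intro Hj. unfold r2. rewrite partial_den_k by (try lia; unfold exR2, exS4; simpl; repeat split; apply allk_xc).
  unfold exR2, exS4. simpl. rewrite !partial_xc by lia.
  unfold xc. destruct j as [|[|[|[|[|]]]]]; try lia; simpl; ring.
Qed.

Lemma chi_range a q : 0 <= chi a q <= 1.
Proof. apply theta_range. Qed.

Lemma dchi_bound1 a j k q : 1 < a -> (1 <= j <= 4)%nat -> (1 <= k <= 4)%nat ->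
  Rabs (dchi a j q * coord q k) <= 2 / ln a.
Proof.
  intros Ha Hj Hk. unfold dchi. rewrite partial_r2 by auto.
  pose proof (dtheta_bound a (r2 q) Ha) as Hb.
  pose proof (ln_pos a Ha).
  assert (Hx : Rabs (2 * coord q j * coord q k) <= 2 * r2 q).
  { rewrite r2_eq. rewrite Rabs_mult, Rabs_mult. rewrite (Rabs_right 2) by lra.
    assert (Hjk : Rabs (coord q j) * Rabs (coord q k) <= (coord q j ^ 2 + coord q k ^ 2) / 2).
    { assert (0 <= (Rabs (coord q j) - Rabs (coord q k)) ^ 2) by apply pow2_ge_0.
      rewrite <- (pow2_abs (coord q j)), <- (pow2_abs (coord q k)). nra. }
    destruct j as [|[|[|[|[|]]]]]; try lia; destruct k as [|[|[|[|[|]]]]]; try lia; simpl in *;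
    try nra. }
  replace (dtheta a (r2 q) * (2 * coord q j) * coord q k) with (dtheta a (r2 q) * (2 * coord q j * coord q k)) by ring.
  rewrite Rabs_mult.
  destruct (Rle_dec (r2 q) 0) as [Hr|Hr].
  - rewrite dtheta_zero by (auto; assert (0 <= a ^ 2) by (apply pow_le; lra); lra).
    rewrite Rabs_R0, Rmult_0_l. apply Rlt_le, Rdiv_lt_0_compat; lra.
  - rewrite Rabs_mult in Hb. rewrite (Rabs_right (r2 q)) in Hb by lra.
    apply Rle_trans with (Rabs (dtheta a (r2 q)) * (2 * r2 q)).
    + apply Rmult_le_compat_l; [apply Rabs_pos|auto].
    + unfold Rdiv. nra.
Qed.

Lemma dchi_bound2 a j q : 1 < a -> (1 <= j <= 4)%nat ->
  (dchi a j q) ^ 2 <= 4 / (ln a ^ 2 * a ^ 2).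
Proof.
  intros Ha Hj. unfold dchi. rewrite partial_r2 by auto.
  pose proof (dtheta_bound a (r2 q) Ha) as Hb.
  pose proof (ln_pos a Ha).
  assert (Ha2 : 0 < a ^ 2) by (apply pow_lt; lra).
  destruct (Rle_dec (r2 q) (a ^ 2)) as [Hr|Hr].
  - rewrite dtheta_zero by auto. replace ((0 * (2 * coord q j)) ^ 2) with 0 by ring.
    apply Rlt_le, Rdiv_lt_0_compat; [lra|]. apply Rmult_lt_0_compat; auto. apply pow_lt; auto.
  - assert (Hx : coord q j ^ 2 <= r2 q).
    { rewrite r2_eq. destruct j as [|[|[|[|[|]]]]]; try lia; simpl; nra. }
    set (d := dtheta a (r2 q)) in *. set (s := r2 q) in *.
    rewrite Rabs_mult, (Rabs_right s) in Hb by lra.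
    assert (Hd2 : (d * s) ^ 2 <= (/ ln a) ^ 2).
    { rewrite <- (pow2_abs (d * s)). rewrite Rabs_mult, (Rabs_right s) by lra.
      apply pow_incr. split; [|auto]. apply Rmult_le_pos; [apply Rabs_pos|lra]. }
    replace ((d * (2 * coord q j)) ^ 2) with (4 * d ^ 2 * coord q j ^ 2) by ring.
    apply Rle_trans with (4 * d ^ 2 * s). { apply Rmult_le_compat_l; auto. nra. }
    replace (4 * d ^ 2 * s) with (4 * (d * s) ^ 2 / s) by (field; lra).
    apply Rle_trans with (4 * (/ ln a) ^ 2 / s).
    { unfold Rdiv. apply Rmult_le_compat_r; [left; apply Rinv_0_lt_compat; lra|lra]. }
    replace (4 * (/ ln a) ^ 2 / s) with (4 / (ln a ^ 2 * s)) by (field; lra).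
    unfold Rdiv. apply Rmult_le_compat_l; [lra|]. apply Rinv_le_contravar.
    apply Rmult_lt_0_compat; [apply pow_lt; lra|lra]. apply Rmult_le_compat_l; [apply pow_le; lra|lra].
Qed.

Lemma chi_one a q : 1 < a -> r2 q <= a ^ 2 -> chi a q = 1.
Proof. intros. apply theta_one; auto. Qed.
Lemma chi_zero a q : 1 < a -> a ^ 4 <= r2 q -> chi a q = 0.
Proof. intros. apply theta_zero; auto. Qed.


Definition sl (f : P5 -> R) : R -> R -> R -> R -> R := fun x1 x2 x3 x4 => f (mkP 0 x1 x2 x3 x4).

Lemma cont4_sl f x1 x2 x3 x4 : continuous5 f -> cont4 (sl f) x1 x2 x3 x4.
Proof.
  intros Hf eps Heps. destruct (Hf (mkP 0 x1 x2 x3 x4) eps Heps) as [d [Hd H]].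
  exists d; split; auto. intros y1 y2 y3 y4 H1 H2 H3 H4. unfold sl. apply H.
  intros mu Hmu. destruct mu as [|[|[|[|[|]]]]]; simpl; auto; try lia.
  rewrite Rminus_diag, Rabs_R0; lra.
Qed.

Lemma UC_sl f M : continuous5 f -> UC (sl f) M.
Proof. intro H. apply UC_of_cont. intros; apply cont4_sl; auto. Qed.

Definition ef A phi (q : P5) : R := den (exSF A) q / 4 + den (exSD A phi) q / 2.

Lemma Fdiag_p A l p : Fcurv A l l p = 0.
Proof. unfold Fcurv; ring. Qed.

Lemma edens_eq A phi : StaticHyp A phi -> edens A phi = sl (ef A phi).
Proof.
  intros [HF0 HD0].
  do 4 (apply functional_extensionality; intro).
  unfold edens, sl, ef. set (p := mkP 0 x x0 x1 x2).
  cbn [sum_f_R0 Nat.ltb Nat.leb].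
  rewrite !HF0 by lia. rewrite HD0.
  unfold exSF, exSD, exS4. cbn [den].
  rewrite !Fdiag_p.
  rewrite (Fanti_p A 1 2), (Fanti_p A 1 3), (Fanti_p A 1 4), (Fanti_p A 2 3), (Fanti_p A 2 4), (Fanti_p A 3 4).
  unfold Dr, Di. simpl fst; simpl snd. field.
Qed.

Lemma allk_ef A phi : SM A phi -> allk (ef A phi).
Proof.
  intro HS. unfold ef.
  change (fun q => den (exSF A) q / 4 + den (exSD A phi) q / 2) with
    (den (Ad (Mu (exSF A) (Cs (/4))) (Mu (exSD A phi) (Cs (/2))))).
  apply allk_den. unfold exSF, exSD, exS4. simpl.
  repeat split; first [apply allk_F with phi; auto; lia | apply allk_Dr; auto; lia | apply allk_Di; auto; lia].
Qed.

Lemma energy_bound A phi E : SM A phi -> StaticHyp A phi -> energy0_is A phi E ->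
  forall M, 0 < M -> exists N0, forall n, (n >= N0)%nat -> riemann4 (sl (ef A phi)) M n <= E + 1.
Proof.
  intros HS HT HE M HM.
  destruct (riemann_conv (sl (ef A phi)) M HM) as [I HI].
  { apply UC_sl. apply (Ck_cont 0). apply allk_ef; auto. }
  assert (HIE : I <= E).
  { destruct HE as [Hub _]. apply Hub. exists M. split; [lra|].
    unfold cube_integral. rewrite edens_eq by auto. exact HI. }
  destruct (HI 1 ltac:(lra)) as [N0 HN0]. exists N0. intros n Hn.
  specialize (HN0 n Hn). unfold R_dist in HN0. apply Rabs_def2 in HN0. lra.
Qed.


Lemma prod_bound2 x y : - ((x * x + y * y) / 2) <= x * y <= (x * x + y * y) / 2.
Proof. pose proof (pow2_ge_0 (x + y)); pose proof (pow2_ge_0 (x - y)); split; nra. Qed.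
Lemma sq_nn x : 0 <= x * x.
Proof. nra. Qed.

Ltac sqs A phi q :=
  pose proof (sq_nn (Dr A phi 1 q)); pose proof (sq_nn (Dr A phi 2 q));
  pose proof (sq_nn (Dr A phi 3 q)); pose proof (sq_nn (Dr A phi 4 q));
  pose proof (sq_nn (Di A phi 1 q)); pose proof (sq_nn (Di A phi 2 q));
  pose proof (sq_nn (Di A phi 3 q)); pose proof (sq_nn (Di A phi 4 q));
  pose proof (sq_nn (Fcurv A 1 1 q));
  pose proof (sq_nn (Fcurv A 1 2 q));
  pose proof (sq_nn (Fcurv A 1 3 q));
  pose proof (sq_nn (Fcurv A 1 4 q));
  pose proof (sq_nn (Fcurv A 2 1 q));
  pose proof (sq_nn (Fcurv A 2 2 q));
  pose proof (sq_nn (Fcurv A 2 3 q));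
  pose proof (sq_nn (Fcurv A 2 4 q));
  pose proof (sq_nn (Fcurv A 3 1 q));
  pose proof (sq_nn (Fcurv A 3 2 q));
  pose proof (sq_nn (Fcurv A 3 3 q));
  pose proof (sq_nn (Fcurv A 3 4 q));
  pose proof (sq_nn (Fcurv A 4 1 q));
  pose proof (sq_nn (Fcurv A 4 2 q));
  pose proof (sq_nn (Fcurv A 4 3 q));
  pose proof (sq_nn (Fcurv A 4 4 q));
  idtac.

Lemma T_bound A phi j k q : (1 <= j <= 4)%nat -> (1 <= k <= 4)%nat ->
  Rabs (den (exT A phi j k) q) <= 9 * ef A phi q.
Proof.
  intros Hj Hk. apply Rabs_le. sqs A phi q.
  destruct j as [|[|[|[|[|]]]]]; try lia; destruct k as [|[|[|[|[|]]]]]; try lia;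
  match goal with |- context [exT A phi ?j ?k] =>
    pose proof (prod_bound2 (Dr A phi j q) (Dr A phi k q));
    pose proof (prod_bound2 (Di A phi j q) (Di A phi k q));
    pose proof (prod_bound2 (Fcurv A j 1 q) (Fcurv A k 1 q));
    pose proof (prod_bound2 (Fcurv A j 2 q) (Fcurv A k 2 q));
    pose proof (prod_bound2 (Fcurv A j 3 q) (Fcurv A k 3 q));
    pose proof (prod_bound2 (Fcurv A j 4 q) (Fcurv A k 4 q))
  end;
  unfold ef, exT, exSF, exSD, exS4; cbn [den Nat.eqb]; split; lra.
Qed.


Lemma abs_le_split x y : Rabs x <= y -> - y <= x <= y.
Proof. unfold Rabs; destruct Rcase_abs; intros; lra. Qed.

Definition Bf A phi a (q : P5) : R :=
  dchi a 1 q * den (exV A phi 1) q + dchi a 2 q * den (exV A phi 2) q +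
  dchi a 3 q * den (exV A phi 3) q + dchi a 4 q * den (exV A phi 4) q.

Lemma ef_nonneg A phi q : 0 <= ef A phi q.
Proof.
  unfold ef, exSF, exSD, exS4. cbn [den]. unfold Rdiv.
  apply Rplus_le_le_0_compat; apply Rmult_le_pos; try lra;
  repeat apply Rplus_le_le_0_compat; apply sq_nn.
Qed.

Lemma term_bound A phi a j k q : 1 < a -> (1 <= j <= 4)%nat -> (1 <= k <= 4)%nat ->
  Rabs (dchi a j q * (den (exT A phi j k) q * xc k q)) <= 18 / ln a * ef A phi q.
Proof.
  intros Ha Hj Hk.
  replace (dchi a j q * (den (exT A phi j k) q * xc k q)) with
    ((dchi a j q * coord q k) * den (exT A phi j k) q) by (unfold xc; ring).
  rewrite Rabs_mult.
  pose proof (dchi_bound1 a j k q Ha Hj Hk). pose proof (T_bound A phi j k q Hj Hk).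
  pose proof (ef_nonneg A phi q).
  replace (18 / ln a * ef A phi q) with ((2 / ln a) * (9 * ef A phi q)) by (field; pose proof (ln_pos a Ha); lra).
  apply Rmult_le_compat; auto; apply Rabs_pos.
Qed.

Lemma Bf_bound A phi a q : 1 < a -> Rabs (Bf A phi a q) <= 288 / ln a * ef A phi q.
Proof.
  intro Ha. unfold Bf, exV, exS4. cbn [den].
  assert (Hl := ln_pos a Ha).
  assert (E : 288 / ln a * ef A phi q = 16 * (18 / ln a * ef A phi q)) by (field; lra).
  rewrite E.
  repeat rewrite Rmult_plus_distr_l. apply Rabs_le.
  repeat match goal with |- context [dchi a ?j q * (den (exT A phi ?j ?k) q * xc ?k q)] =>
    let h := fresh in
    assert (h := term_bound A phi a j k q Ha ltac:(lia) ltac:(lia));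
    apply abs_le_split in h;
    revert h;
    generalize (dchi a j q * (den (exT A phi j k) q * xc k q)); intro
  end.
  intros. split; lra.
Qed.


Lemma riemann4_swap24 g M n : riemann4 (fun a b c d => g a d c b) M n = riemann4 g M n.
Proof.
  transitivity (riemann4 (fun a b c d => g a c d b) M n).
  { exact (riemann4_swap34 (fun x y z w => g x z w y) M n). }
  transitivity (riemann4 (fun a b c d => g a b d c) M n).
  { exact (riemann4_swap23 (fun x y z w => g x y w z) M n). }
  apply riemann4_swap34.
Qed.

Lemma riemann4_swap14 g M n : riemann4 (fun a b c d => g d b c a) M n = riemann4 g M n.
Proof.
  transitivity (riemann4 (fun a b c d => g d a c b) M n).
  { exact (riemann4_swap12 (fun x y z w => g w x z y) M n). }
  transitivity (riemann4 (fun a b c d => g b a c d) M n).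
  { exact (riemann4_swap24 (fun x y z w => g y x z w) M n). }
  apply riemann4_swap12.
Qed.

Lemma cont4_gen f (P : R -> R -> R -> R -> P5) x1 x2 x3 x4 : continuous5 f ->
  (forall y1 y2 y3 y4 d, Rabs (y1 - x1) < d -> Rabs (y2 - x2) < d -> Rabs (y3 - x3) < d -> Rabs (y4 - x4) < d ->
     forall mu, (mu < 5)%nat -> Rabs (coord (P y1 y2 y3 y4) mu - coord (P x1 x2 x3 x4) mu) < d) ->
  cont4 (fun a b c d => f (P a b c d)) x1 x2 x3 x4.
Proof.
  intros Hf HP eps Heps. destruct (Hf (P x1 x2 x3 x4) eps Heps) as [d [Hd H]].
  exists d; split; [exact Hd|]. intros y1 y2 y3 y4 G1 G2 G3 G4. apply H. intros mu Hmu; apply (HP y1 y2 y3 y4 d); auto.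
Qed.

Ltac pcoord := intros y1 y2 y3 y4 d H1 H2 H3 H4 mu Hmu;
  match type of H1 with Rabs (_ - ?z) < _ => pose proof (Rabs_pos (y1 - z)) end;
  destruct mu as [|[|[|[|[|]]]]]; simpl; try lia; try assumption;
  rewrite Rminus_diag, Rabs_R0; lra.

Lemma div_dir W M j : 0 < M -> Ck 1 W -> (forall q, M ^ 2 <= r2 q -> W q = 0) -> (1 <= j <= 4)%nat ->
  Un_cv (riemann4 (sl (partial j W)) M) 0.
Proof.
  intros HM HW HB Hj.
  assert (Hc : continuous5 (partial j W)) by (apply (Ck_cont 0); apply Ck_partial; auto; lia).
  assert (Hr : forall x1 x2 x3 x4, r2 (mkP 0 x1 x2 x3 x4) = x1 ^ 2 + x2 ^ 2 + x3 ^ 2 + x4 ^ 2).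
  { intros. rewrite r2_eq. reflexivity. }
  assert (HD : forall p, Dv j W p (partial j W p)) by (intro; apply (Ck_Dv 0); auto; lia).
  destruct j as [|[|[|[|[|]]]]]; try lia.
  -
    intros eps Heps.
    destruct (div4 (fun a b c d => sl W d b c a) (fun a b c d => sl (partial 1 W) d b c a) M HM) with (eps := eps)
      as [N0 HN0]; auto.
    + intros x1 x2 x3 x4 _. apply (HD (mkP 0 x4 x2 x3 x1)).
    + intros x1 x2 x3 _. unfold sl. pose proof (pow2_ge_0 x1); pose proof (pow2_ge_0 x2); pose proof (pow2_ge_0 x3). split; apply HB; rewrite Hr; nra.
    + apply UC_of_cont. intros. apply cont4_gen; auto. pcoord.
    + exists N0. intros n Hn. rewrite <- (riemann4_swap14 (sl (partial 1 W)) M n). apply HN0; auto.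
  - intros eps Heps.
    destruct (div4 (fun a b c d => sl W a d c b) (fun a b c d => sl (partial 2 W) a d c b) M HM) with (eps := eps)
      as [N0 HN0]; auto.
    + intros x1 x2 x3 x4 _. apply (HD (mkP 0 x1 x4 x3 x2)).
    + intros x1 x2 x3 _. unfold sl. pose proof (pow2_ge_0 x1); pose proof (pow2_ge_0 x2); pose proof (pow2_ge_0 x3). split; apply HB; rewrite Hr; nra.
    + apply UC_of_cont. intros. apply cont4_gen; auto. pcoord.
    + exists N0. intros n Hn. rewrite <- (riemann4_swap24 (sl (partial 2 W)) M n). apply HN0; auto.
  - intros eps Heps.
    destruct (div4 (fun a b c d => sl W a b d c) (fun a b c d => sl (partial 3 W) a b d c) M HM) with (eps := eps)
      as [N0 HN0]; auto.
    + intros x1 x2 x3 x4 _. apply (HD (mkP 0 x1 x2 x4 x3)).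
    + intros x1 x2 x3 _. unfold sl. pose proof (pow2_ge_0 x1); pose proof (pow2_ge_0 x2); pose proof (pow2_ge_0 x3). split; apply HB; rewrite Hr; nra.
    + apply UC_of_cont. intros. apply cont4_gen; auto. pcoord.
    + exists N0. intros n Hn. rewrite <- (riemann4_swap34 (sl (partial 3 W)) M n). apply HN0; auto.
  - apply (div4 (sl W)); auto.
    + intros x1 x2 x3 x4 _. apply (HD (mkP 0 x1 x2 x3 x4)).
    + intros x1 x2 x3 _. unfold sl. pose proof (pow2_ge_0 x1); pose proof (pow2_ge_0 x2); pose proof (pow2_ge_0 x3). split; apply HB; rewrite Hr; nra.
    + apply UC_sl; auto.
Qed.


Definition exW A phi a j : Ex := Mu (At (chi a)) (exV A phi j).

Ltac atoms_tac :=
  repeat match goal with |- context [if ?b then _ else _] => destruct b end;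
  cbn [allAt]; repeat split;
  repeat match goal with
  | |- allk (xc _) => apply allk_xc
  | H : SM ?A ?phi |- allk (Fcurv ?A _ _) => apply (allk_F A phi); auto; lia
  | H : SM ?A ?phi |- allk (Dr ?A ?phi _) => apply allk_Dr; auto; lia
  | H : SM ?A ?phi |- allk (Di ?A ?phi _) => apply allk_Di; auto; lia
  end.

Lemma allk_V A phi j : SM A phi -> (j < 5)%nat -> allAt allk (exV A phi j).
Proof. intros HS Hj. unfold exV, exT, exSD, exSF, exS4. atoms_tac. Qed.

Lemma allk_SD A phi : SM A phi -> allAt allk (exSD A phi).
Proof. intros HS. unfold exSD, exS4. atoms_tac. Qed.

Lemma allAt_kDv mu p e : (mu < 5)%nat -> allAt allk e -> allAt (fun f => exists l, Dv mu f p l) e.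
Proof.
  intros Hmu H. eapply allAt_impl; [|exact H]. intros f Hf. exists (partial mu f p).
  apply (Ck_Dv 0); [apply Hf|auto].
Qed.

Lemma partial_W A phi a j q : SM A phi -> 1 < a -> (1 <= j <= 4)%nat ->
  partial j (den (exW A phi a j)) q = dchi a j q * den (exV A phi j) q + chi a q * den (dE j (exV A phi j)) q.
Proof.
  intros HS Ha Hj. unfold exW. rewrite partial_den by (first [lia | split; [eexists; apply Dv_chi; auto; lia| apply allAt_kDv; [lia| apply allk_V; auto; lia]]]).
  cbn [dE den]. rewrite partial_chi by (auto; lia). ring.
Qed.

Lemma Ck1_W A phi a j : SM A phi -> 1 < a -> (j < 5)%nat -> Ck 1 (den (exW A phi a j)).
Proof.
  intros HS Ha Hj. apply den_Ck. unfold exW. split.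
  - apply Ck1_chi; auto.
  - eapply allAt_impl; [|apply allk_V; auto]. intros f Hf. apply Hf.
Qed.

Lemma W_zero A phi a j q : 1 < a -> a ^ 4 <= r2 q -> den (exW A phi a j) q = 0.
Proof. intros Ha Hq. unfold exW. cbn [den]. rewrite chi_zero by auto. ring. Qed.

Lemma W_sum A phi a q : SM A phi -> is_MKG A phi -> StaticHyp A phi -> 1 < a ->
  partial 1 (den (exW A phi a 1)) q + partial 2 (den (exW A phi a 2)) q +
  partial 3 (den (exW A phi a 3)) q + partial 4 (den (exW A phi a 4)) q
  = Bf A phi a q - chi a q * den (exSD A phi) q.
Proof.
  intros HS HM HT Ha. rewrite !partial_W by (auto; lia).
  pose proof (pohozaev_pt A phi q HS HM HT) as HP.
  unfold Bf.
  replace (chi a q * den (exSD A phi) q) with (- (chi a q * (- den (exSD A phi) q))) by ring.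
  rewrite <- HP. ring.
Qed.

Lemma SD_nonneg A phi q : 0 <= den (exSD A phi) q.
Proof.
  unfold exSD, exS4. cbn [den]. repeat apply Rplus_le_le_0_compat; apply sq_nn.
Qed.

Lemma riemann4_ext g1 g2 M n : (forall x1 x2 x3 x4, g1 x1 x2 x3 x4 = g2 x1 x2 x3 x4) ->
  riemann4 g1 M n = riemann4 g2 M n.
Proof.
  intro H. replace g1 with g2; auto.
  do 4 (apply functional_extensionality; intro). symmetry; apply H.
Qed.

Lemma exp_gt1 t : 0 < t -> 1 < exp t.
Proof. intro. pose proof (exp_ineq1 t ltac:(lra)). lra. Qed.

Lemma exp_sq t : exp t ^ 2 = exp (2 * t).
Proof. replace (2 * t) with (t + t) by ring. rewrite exp_plus. ring. Qed.
Lemma exp_4 t : exp t ^ 4 = exp (4 * t).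
Proof. replace (4 * t) with (t + t + t + t) by ring. rewrite !exp_plus. ring. Qed.

Lemma exp_le' x y : x <= y -> exp x <= exp y.
Proof. intro H. destruct (Req_dec x y); [subst; lra|]. left; apply exp_increasing; lra. Qed.

Lemma chi_mono a a0 q : 1 < a0 -> 1 < a -> a0 ^ 4 <= a ^ 2 -> chi a0 q <= chi a q.
Proof.
  intros H0 H1 H2. destruct (Rle_dec (r2 q) (a ^ 2)).
  - rewrite (chi_one a) by auto. apply chi_range.
  - rewrite (chi_zero a0) by (auto; lra). apply chi_range.
Qed.


Lemma r2_nonneg q : 0 <= r2 q.
Proof. rewrite r2_eq. pose proof (pow2_ge_0 (coord q 1)). pose proof (pow2_ge_0 (coord q 2)).
  pose proof (pow2_ge_0 (coord q 3)). pose proof (pow2_ge_0 (coord q 4)). lra. Qed.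

Lemma cont_prod_chi a f : 1 < a -> allk f -> continuous5 (fun q => chi a q * f q).
Proof.
  intros Ha Hf. apply cont5_at. intro p. apply cont_at_mult; apply cont5_at.
  - apply (Ck_cont 1). apply Ck1_chi; auto.
  - apply (Ck_cont 0). apply Hf.
Qed.

Lemma big_T (x : R) : exists T, 0 < T /\ x < T.
Proof. exists (Rabs x + 1). split; [pose proof (Rabs_pos x); lra|]. pose proof (Rle_abs x). lra. Qed.

Lemma phase1 A phi E : SM A phi -> is_MKG A phi -> StaticHyp A phi -> energy0_is A phi E ->
  forall x1 x2 x3 x4, den (exSD A phi) (mkP 0 x1 x2 x3 x4) = 0.
Proof.
  intros HS HM HT HE x1 x2 x3 x4.
  set (x0 := mkP 0 x1 x2 x3 x4).
  destruct (Req_dec (den (exSD A phi) x0) 0) as [Hz|Hnz]; auto. exfalso.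
  assert (Hpos : 0 < den (exSD A phi) x0) by (pose proof (SD_nonneg A phi x0); lra).
  set (T0 := r2 x0 + 1).
  assert (HT0 : 0 < T0) by (pose proof (r2_nonneg x0); unfold T0; lra).
  set (a0 := exp T0).
  assert (Ha0 : 1 < a0) by (apply exp_gt1; auto).
  assert (Ha0x : r2 x0 <= a0 ^ 2).
  { unfold a0. rewrite exp_sq. pose proof (exp_ineq1 (2 * T0) ltac:(lra)). unfold T0 in *. lra. }
  set (w0 := sl (fun q => chi a0 q * den (exSD A phi) q)).
  set (M0 := Rabs x1 + Rabs x2 + Rabs x3 + Rabs x4 + 1).
  pose proof (Rabs_pos x1). pose proof (Rabs_pos x2). pose proof (Rabs_pos x3). pose proof (Rabs_pos x4).
  destruct (riemann_pos w0 M0 x1 x2 x3 x4) as [c [Hc Hcpos]].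
  - unfold M0; lra.
  - intros. unfold w0, sl. apply Rmult_le_pos; [apply chi_range| apply SD_nonneg].
  - apply cont4_sl. apply cont_prod_chi; auto. apply allk_den, allk_SD; auto.
  - unfold M0; lra.
  - unfold M0; lra.
  - unfold M0; lra.
  - unfold M0; lra.
  - unfold w0, sl. fold x0. rewrite chi_one by auto. lra.
  - set (T := 2 * T0 + M0 + 576 * (Rabs E + 1) / c + 1).
    assert (HEc : 0 <= 576 * (Rabs E + 1) / c) by (apply Rmult_le_pos; [pose proof (Rabs_pos E); lra| left; apply Rinv_0_lt_compat; auto]).
    assert (HTp : 0 < T) by (unfold T, M0; lra).
    set (a := exp T).
    assert (Ha : 1 < a) by (apply exp_gt1; auto).
    assert (HlnA : ln a = T) by (apply ln_exp).
    assert (HaM0 : M0 <= a). { pose proof (exp_ineq1 T ltac:(lra)). unfold a, T in *. lra. }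
    assert (Ha2 : a <= a ^ 2) by nra.
    set (M := a ^ 2 + 1).
    assert (HMp : 0 < M) by (unfold M; nra).
    assert (HMM0 : M0 <= M) by (unfold M; lra).
    assert (Haa0 : a0 ^ 4 <= a ^ 2).
    { unfold a, a0. rewrite exp_sq, exp_4. apply exp_le'. unfold T, M0. lra. }
    assert (HMa : a ^ 4 <= M ^ 2).
    { unfold M. assert (0 <= a ^ 2) by nra. nra. }
    destruct (Hcpos M HMM0) as [N0 HN0].
    destruct (energy_bound A phi E HS HT HE M HMp) as [N1 HN1].
    assert (HD : forall j, (1 <= j <= 4)%nat -> exists N, forall n, (n >= N)%nat ->
                 Rabs (riemann4 (sl (partial j (den (exW A phi a j)))) M n) < c / 8).
    { intros j Hj. destruct (div_dir (den (exW A phi a j)) M j HMp) with (eps := c / 8) as [N HN]; auto.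
      - apply Ck1_W; auto; lia.
      - intros q Hq. apply W_zero; auto. lra.
      - lra.
      - exists N. intros n Hn. specialize (HN n Hn). unfold R_dist in HN. rewrite Rminus_0_r in HN. auto. }
    destruct (HD 1%nat ltac:(lia)) as [N2 HN2].
    destruct (HD 2%nat ltac:(lia)) as [N3 HN3].
    destruct (HD 3%nat ltac:(lia)) as [N4 HN4].
    destruct (HD 4%nat ltac:(lia)) as [N5 HN5].
    set (n := (N0 + N1 + N2 + N3 + N4 + N5)%nat).
    specialize (HN0 n ltac:(unfold n; lia)). specialize (HN1 n ltac:(unfold n; lia)).
    specialize (HN2 n ltac:(unfold n; lia)). specialize (HN3 n ltac:(unfold n; lia)).
    specialize (HN4 n ltac:(unfold n; lia)). specialize (HN5 n ltac:(unfold n; lia)).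
    assert (Lo : riemann4 w0 M n <= riemann4 (sl (fun q => chi a q * den (exSD A phi) q)) M n).
    { apply riemann4_le; auto. intros y1 y2 y3 y4 _. unfold w0, sl.
      apply Rmult_le_compat_r; [apply SD_nonneg|]. apply chi_mono; auto. }
    assert (Dec : riemann4 (sl (fun q => chi a q * den (exSD A phi) q)) M n =
      riemann4 (sl (Bf A phi a)) M n + (-1) * (riemann4 (sl (partial 1 (den (exW A phi a 1)))) M n +
        (riemann4 (sl (partial 2 (den (exW A phi a 2)))) M n +
        (riemann4 (sl (partial 3 (den (exW A phi a 3)))) M n +
         riemann4 (sl (partial 4 (den (exW A phi a 4)))) M n)))).
    { rewrite <- !riemann4_plus, <- riemann4_scal, <- riemann4_plus.
      apply riemann4_ext. intros. unfold sl.
      pose proof (W_sum A phi a (mkP 0 x5 x6 x7 x8) HS HM HT Ha). lra. }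
    assert (Up : riemann4 (sl (Bf A phi a)) M n <= 288 / T * riemann4 (sl (ef A phi)) M n).
    { rewrite <- riemann4_scal. apply riemann4_le; auto. intros. unfold sl.
      pose proof (Bf_bound A phi a (mkP 0 x5 x6 x7 x8) Ha) as HBB. rewrite HlnA in HBB.
      apply abs_le_split in HBB. lra. }
    assert (H288 : 288 / T * riemann4 (sl (ef A phi)) M n <= 288 / T * (Rabs E + 1)).
    { apply Rmult_le_compat_l. apply Rlt_le, Rdiv_lt_0_compat; lra. pose proof (Rle_abs E). lra. }
    assert (Hsmall : 288 / T * (Rabs E + 1) < c / 2).
    { assert (HQ1 : 576 * (Rabs E + 1) / c < T) by (unfold T, M0; lra).
      assert (HQ2 : 576 * (Rabs E + 1) < T * c).
      { apply Rmult_lt_reg_r with (/ c). apply Rinv_0_lt_compat; auto.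
        replace (T * c * / c) with T by (field; lra). exact HQ1. }
      apply Rmult_lt_reg_r with (2 * T); [lra|].
      replace (288 / T * (Rabs E + 1) * (2 * T)) with (576 * (Rabs E + 1)) by (field; lra).
      lra. }
    apply Rlt_le in HN2, HN3, HN4, HN5.
    apply abs_le_split in HN2. apply abs_le_split in HN3.
    apply abs_le_split in HN4. apply abs_le_split in HN5.
    lra.
Qed.


Lemma partial_plus mu f g q : (mu < 5)%nat -> allk f -> allk g ->
  partial mu (fun p => f p + g p) q = partial mu f q + partial mu g q.
Proof.
  intros. change (fun p => f p + g p) with (den (Ad (At f) (At g))).
  rewrite partial_den_k; simpl; auto.
Qed.

Lemma partial_sum4 mu f1 f2 f3 f4 q : (mu < 5)%nat -> allk f1 -> allk f2 -> allk f3 -> allk f4 ->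
  partial mu (fun p => f1 p + f2 p + f3 p + f4 p) q =
  partial mu f1 q + partial mu f2 q + partial mu f3 q + partial mu f4 q.
Proof.
  intros. change (fun p => f1 p + f2 p + f3 p + f4 p) with (den (Ad (Ad (Ad (At f1) (At f2)) (At f3)) (At f4))).
  rewrite partial_den_k; simpl; auto.
Qed.

Lemma partial_slice0 f j q : (forall p, c0 p = 0 -> f p = 0) -> (1 <= j <= 4)%nat -> c0 q = 0 ->
  partial j f q = 0.
Proof.
  intros Hf Hj Hq. apply partial_eq. unfold Dv.
  eapply derivable_pt_lim_ext; [|apply (derivable_pt_lim_const 0)].
  intro s. symmetry. apply Hf. destruct q; destruct j as [|[|[|[|[|]]]]]; simpl in *; auto; lia.
Qed.

Definition Lap (h : P5 -> R) (q : P5) : R :=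
  partial 1 (partial 1 h) q + partial 2 (partial 2 h) q + partial 3 (partial 3 h) q + partial 4 (partial 4 h) q.

Lemma lap_term A phi j k l q : SM A phi -> (j < 5)%nat -> (k < 5)%nat -> (l < 5)%nat ->
  partial l (partial l (Fcurv A j k)) q =
  partial j (partial l (Fcurv A l k)) q + partial k (partial l (Fcurv A j l)) q.
Proof.
  intros HS Hj Hk Hl.
  assert (Hf : partial l (Fcurv A j k) = fun p => partial j (Fcurv A l k) p + partial k (Fcurv A j l) p).
  { apply functional_extensionality; intro p.
    pose proof (bianchi A phi l j k p HS Hl Hj Hk) as HB.
    rewrite (partial_F_anti A phi j l k p HS) in HB by auto.
    rewrite (partial_F_anti A phi k j l p HS) in HB by auto. lra. }
  rewrite Hf. rewrite partial_plus; auto.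
  - rewrite (schwarz_k (Fcurv A l k) l j), (schwarz_k (Fcurv A j l) l k); auto;
    apply (allk_F A phi); auto.
  - apply allk_partial; auto. apply (allk_F A phi); auto.
  - apply allk_partial; auto. apply (allk_F A phi); auto.
Qed.

Lemma div_F_fun A phi k : is_MKG A phi -> StaticHyp A phi -> SM A phi -> (k < 5)%nat ->
  (fun p => partial 1 (Fcurv A 1 k) p + partial 2 (Fcurv A 2 k) p + partial 3 (Fcurv A 3 k) p + partial 4 (Fcurv A 4 k) p)
  = (fun p => - Jc A phi k p).
Proof.
  intros HM HT HS Hk. apply functional_extensionality; intro p.
  pose proof (maxwell_sp A phi k p HM HT Hk) as HX.
  rewrite (partial_F_anti A phi 1 k 1 p HS), (partial_F_anti A phi 2 k 2 p HS),
     (partial_F_anti A phi 3 k 3 p HS), (partial_F_anti A phi 4 k 4 p HS) by lia.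
  lra.
Qed.

Lemma div_F_fun2 A phi j : is_MKG A phi -> StaticHyp A phi -> (j < 5)%nat ->
  (fun p => partial 1 (Fcurv A j 1) p + partial 2 (Fcurv A j 2) p + partial 3 (Fcurv A j 3) p + partial 4 (Fcurv A j 4) p)
  = (fun p => Jc A phi j p).
Proof.
  intros HM HT Hj. apply functional_extensionality; intro p. apply maxwell_sp; auto.
Qed.

Lemma lap_F A phi j k q : SM A phi -> is_MKG A phi -> StaticHyp A phi ->
  (forall m p, (m < 5)%nat -> c0 p = 0 -> Jc A phi m p = 0) ->
  (1 <= j <= 4)%nat -> (1 <= k <= 4)%nat -> c0 q = 0 -> Lap (Fcurv A j k) q = 0.
Proof.
  intros HS HM HT HJ Hj Hk Hq. unfold Lap.
  rewrite !(lap_term A phi j k) by (auto; lia).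
  assert (AF : forall m n, (m < 5)%nat -> (n < 5)%nat -> allk (partial n (Fcurv A m n))).
  { intros. apply allk_partial; auto. apply (allk_F A phi); auto. }
  assert (AF1 : forall m n l, (m < 5)%nat -> (n < 5)%nat -> (l < 5)%nat -> allk (partial l (Fcurv A m n))).
  { intros. apply allk_partial; auto. apply (allk_F A phi); auto. }
  replace (partial j (partial 1 (Fcurv A 1 k)) q + partial k (partial 1 (Fcurv A j 1)) q +
    (partial j (partial 2 (Fcurv A 2 k)) q + partial k (partial 2 (Fcurv A j 2)) q) +
    (partial j (partial 3 (Fcurv A 3 k)) q + partial k (partial 3 (Fcurv A j 3)) q) +
    (partial j (partial 4 (Fcurv A 4 k)) q + partial k (partial 4 (Fcurv A j 4)) q))
  with ((partial j (partial 1 (Fcurv A 1 k)) q + partial j (partial 2 (Fcurv A 2 k)) q +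
         partial j (partial 3 (Fcurv A 3 k)) q + partial j (partial 4 (Fcurv A 4 k)) q) +
        (partial k (partial 1 (Fcurv A j 1)) q + partial k (partial 2 (Fcurv A j 2)) q +
         partial k (partial 3 (Fcurv A j 3)) q + partial k (partial 4 (Fcurv A j 4)) q)) by ring.
  rewrite <- !partial_sum4 by (first [lia | apply AF1; lia]).
  rewrite (div_F_fun A phi k HM HT HS), (div_F_fun2 A phi j HM HT) by lia.
  assert (Z1 : partial j (fun p => - Jc A phi k p) q = 0).
  { apply partial_slice0; auto. intros p Hp. rewrite HJ; auto; [ring|lia]. }
  assert (Z2 : partial k (fun p => Jc A phi j p) q = 0).
  { apply partial_slice0; auto. intros p Hp. apply HJ; auto; lia. }
  rewrite Z1, Z2. ring.
Qed.


Definition exG a (h : P5 -> R) l : Ex :=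
  Mu (Mu (At (chi a)) (At (chi a))) (Mu (At h) (At (partial l h))).

Lemma partial_G a h l q : 1 < a -> allk h -> (1 <= l <= 4)%nat ->
  partial l (den (exG a h l)) q =
  (dchi a l q * chi a q + chi a q * dchi a l q) * (h q * partial l h q) +
  chi a q * chi a q * (partial l h q * partial l h q + h q * partial l (partial l h) q).
Proof.
  intros Ha Hh Hl. unfold exG.
  rewrite partial_den.
  - cbn [dE den]. rewrite partial_chi by (auto; lia). ring.
  - lia.
  - cbn [allAt]. repeat split; try (eexists; apply Dv_chi; auto; lia).
    + exists (partial l h q). apply (Ck_Dv 0); [apply Hh|lia].
    + exists (partial l (partial l h) q). apply (Ck_Dv 0); [apply allk_partial; auto; lia|lia].
Qed.

Definition grad2 (h : P5 -> R) (q : P5) : R :=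
  partial 1 h q * partial 1 h q + partial 2 h q * partial 2 h q +
  partial 3 h q * partial 3 h q + partial 4 h q * partial 4 h q.

Definition dchi2 a q : R :=
  dchi a 1 q * dchi a 1 q + dchi a 2 q * dchi a 2 q + dchi a 3 q * dchi a 3 q + dchi a 4 q * dchi a 4 q.

Lemma G_ineq a h q : 1 < a -> allk h -> Lap h q = 0 ->
  chi a q * chi a q * grad2 h q / 2 <=
  partial 1 (den (exG a h 1)) q + partial 2 (den (exG a h 2)) q + partial 3 (den (exG a h 3)) q
  + partial 4 (den (exG a h 4)) q + 2 * (h q * h q) * dchi2 a q.
Proof.
  intros Ha Hh HL. rewrite !partial_G by (auto; lia).
  unfold Lap in HL. unfold grad2, dchi2.
  assert (E4 : partial 4 (partial 4 h) q = - (partial 1 (partial 1 h) q + partial 2 (partial 2 h) q + partial 3 (partial 3 h) q)) by lra.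
  rewrite E4.
  pose proof (pow2_ge_0 (chi a q * partial 1 h q + 2 * h q * dchi a 1 q)).
  pose proof (pow2_ge_0 (chi a q * partial 2 h q + 2 * h q * dchi a 2 q)).
  pose proof (pow2_ge_0 (chi a q * partial 3 h q + 2 * h q * dchi a 3 q)).
  pose proof (pow2_ge_0 (chi a q * partial 4 h q + 2 * h q * dchi a 4 q)).
  nra.
Qed.

Lemma F_sq_le A phi j k q : (1 <= j <= 4)%nat -> (1 <= k <= 4)%nat ->
  Fcurv A j k q * Fcurv A j k q <= 2 * ef A phi q.
Proof.
  intros Hj Hk. pose proof (SD_nonneg A phi q).
  unfold ef, exSF, exS4. cbn [den].
  rewrite !Fdiag_p.
  rewrite (Fanti_p A 1 2), (Fanti_p A 1 3), (Fanti_p A 1 4), (Fanti_p A 2 3), (Fanti_p A 2 4), (Fanti_p A 3 4).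
  pose proof (sq_nn (Fcurv A 1 2 q)). pose proof (sq_nn (Fcurv A 1 3 q)). pose proof (sq_nn (Fcurv A 1 4 q)).
  pose proof (sq_nn (Fcurv A 2 3 q)). pose proof (sq_nn (Fcurv A 2 4 q)). pose proof (sq_nn (Fcurv A 3 4 q)).
  destruct j as [|[|[|[|[|]]]]]; try lia; destruct k as [|[|[|[|[|]]]]]; try lia;
  rewrite ?Fdiag_p, ?(Fanti_p A 1 2), ?(Fanti_p A 1 3), ?(Fanti_p A 1 4), ?(Fanti_p A 2 3), ?(Fanti_p A 2 4), ?(Fanti_p A 3 4);
  nra.
Qed.


Definition exGr (h : P5 -> R) : Ex :=
  Ad (Ad (Ad (Mu (At (partial 1 h)) (At (partial 1 h))) (Mu (At (partial 2 h)) (At (partial 2 h))))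
     (Mu (At (partial 3 h)) (At (partial 3 h)))) (Mu (At (partial 4 h)) (At (partial 4 h))).

Lemma grad2_den h : grad2 h = den (exGr h).
Proof. reflexivity. Qed.

Lemma allAt_Gr h : allk h -> allAt allk (exGr h).
Proof. intro H. unfold exGr. cbn [allAt]. repeat split; apply allk_partial; auto; lia. Qed.

Lemma grad2_nonneg h q : 0 <= grad2 h q.
Proof. unfold grad2. pose proof (sq_nn (partial 1 h q)). pose proof (sq_nn (partial 2 h q)).
  pose proof (sq_nn (partial 3 h q)). pose proof (sq_nn (partial 4 h q)). lra. Qed.

Lemma cont_w a h : 1 < a -> allk h -> continuous5 (fun q => chi a q * chi a q * grad2 h q / 2).
Proof.
  intros Ha Hh.
  change (fun q => chi a q * chi a q * grad2 h q / 2) with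
    (den (Mu (Mu (Mu (At (chi a)) (At (chi a))) (exGr h)) (Cs (/ 2)))).
  apply (Ck_cont 0). apply den_Ck. unfold exGr. cbn [allAt]. repeat split;
  match goal with
  | |- Ck 0 (chi a) => apply (Ck_S 0); apply Ck1_chi; auto
  | |- Ck 0 (partial ?l h) => apply (allk_partial h l ltac:(lia) Hh)
  end.
Qed.

Lemma Ck1_G a h l : 1 < a -> allk h -> (l < 5)%nat -> Ck 1 (den (exG a h l)).
Proof.
  intros Ha Hh Hl. apply den_Ck. unfold exG. cbn [allAt].
  split; [split; apply Ck1_chi; auto|split; [apply Hh| apply (allk_partial h l Hl Hh)]].
Qed.

Lemma G_zero a h l q : 1 < a -> a ^ 4 <= r2 q -> den (exG a h l) q = 0.
Proof. intros. unfold exG. cbn [den]. rewrite chi_zero by auto. ring. Qed.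

Lemma dchi2_bound a q : 1 < a -> dchi2 a q <= 16 / (ln a ^ 2 * a ^ 2).
Proof.
  intro Ha. unfold dchi2.
  pose proof (dchi_bound2 a 1 q Ha ltac:(lia)). pose proof (dchi_bound2 a 2 q Ha ltac:(lia)).
  pose proof (dchi_bound2 a 3 q Ha ltac:(lia)). pose proof (dchi_bound2 a 4 q Ha ltac:(lia)).
  simpl in *. unfold Rdiv in *. lra.
Qed.

Lemma dchi2_nonneg a q : 0 <= dchi2 a q.
Proof. unfold dchi2. pose proof (sq_nn (dchi a 1 q)). pose proof (sq_nn (dchi a 2 q)).
  pose proof (sq_nn (dchi a 3 q)). pose proof (sq_nn (dchi a 4 q)). lra. Qed.

Lemma phase2_grad A phi E j k : SM A phi -> is_MKG A phi -> StaticHyp A phi -> energy0_is A phi E ->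
  (forall m p, (m < 5)%nat -> c0 p = 0 -> Jc A phi m p = 0) ->
  (1 <= j <= 4)%nat -> (1 <= k <= 4)%nat ->
  forall x1 x2 x3 x4, grad2 (Fcurv A j k) (mkP 0 x1 x2 x3 x4) = 0.
Proof.
  intros HS HM HT HE HJ Hj Hk x1 x2 x3 x4.
  set (h := Fcurv A j k).
  assert (Hh : allk h) by (apply (allk_F A phi); auto; lia).
  set (x0 := mkP 0 x1 x2 x3 x4).
  destruct (Req_dec (grad2 h x0) 0) as [Hz|Hnz]; auto. exfalso.
  assert (Hpos : 0 < grad2 h x0) by (pose proof (grad2_nonneg h x0); lra).
  set (T0 := r2 x0 + 1).
  assert (HT0 : 0 < T0) by (pose proof (r2_nonneg x0); unfold T0; lra).
  set (a0 := exp T0).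
  assert (Ha0 : 1 < a0) by (apply exp_gt1; auto).
  assert (Ha0x : r2 x0 <= a0 ^ 2).
  { unfold a0. rewrite exp_sq. pose proof (exp_ineq1 (2 * T0) ltac:(lra)). unfold T0 in *. lra. }
  set (w0 := sl (fun q => chi a0 q * chi a0 q * grad2 h q / 2)).
  set (M0 := Rabs x1 + Rabs x2 + Rabs x3 + Rabs x4 + 1).
  pose proof (Rabs_pos x1). pose proof (Rabs_pos x2). pose proof (Rabs_pos x3). pose proof (Rabs_pos x4).
  destruct (riemann_pos w0 M0 x1 x2 x3 x4) as [c [Hc Hcpos]].
  - unfold M0; lra.
  - intros. unfold w0, sl. pose proof (grad2_nonneg h (mkP 0 y1 y2 y3 y4)).
    pose proof (sq_nn (chi a0 (mkP 0 y1 y2 y3 y4))). apply Rmult_le_pos; [|lra]. apply Rmult_le_pos; auto.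
  - apply cont4_sl. apply cont_w; auto.
  - unfold M0; lra.
  - unfold M0; lra.
  - unfold M0; lra.
  - unfold M0; lra.
  - unfold w0, sl. fold x0. rewrite chi_one by auto. lra.
  - set (T := 2 * T0 + M0 + 128 * (Rabs E + 1) / c + 1).
    assert (HEc : 0 <= 128 * (Rabs E + 1) / c) by (apply Rmult_le_pos; [pose proof (Rabs_pos E); lra| left; apply Rinv_0_lt_compat; auto]).
    assert (HTp : 1 <= T) by (unfold T, M0; lra).
    set (a := exp T).
    assert (Ha : 1 < a) by (apply exp_gt1; lra).
    assert (HlnA : ln a = T) by (apply ln_exp).
    assert (HaM0 : M0 <= a). { pose proof (exp_ineq1 T ltac:(lra)). unfold a, T in *. lra. }
    assert (Ha2 : a <= a ^ 2) by nra.
    set (M := a ^ 2 + 1).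
    assert (HMp : 0 < M) by (unfold M; nra).
    assert (HMM0 : M0 <= M) by (unfold M; lra).
    assert (Haa0 : a0 ^ 4 <= a ^ 2).
    { unfold a, a0. rewrite exp_sq, exp_4. apply exp_le'. unfold T, M0. lra. }
    assert (HMa : a ^ 4 <= M ^ 2).
    { unfold M. assert (0 <= a ^ 2) by nra. nra. }
    destruct (Hcpos M HMM0) as [N0 HN0].
    destruct (energy_bound A phi E HS HT HE M HMp) as [N1 HN1].
    assert (HD : forall l, (1 <= l <= 4)%nat -> exists N, forall n, (n >= N)%nat ->
                 Rabs (riemann4 (sl (partial l (den (exG a h l)))) M n) < c / 8).
    { intros l Hl. destruct (div_dir (den (exG a h l)) M l HMp) with (eps := c / 8) as [N HN]; auto.
      - apply Ck1_G; auto; lia.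
      - intros q Hq. apply G_zero; auto. lra.
      - lra.
      - exists N. intros n Hn. specialize (HN n Hn). unfold R_dist in HN. rewrite Rminus_0_r in HN. auto. }
    destruct (HD 1%nat ltac:(lia)) as [N2 HN2].
    destruct (HD 2%nat ltac:(lia)) as [N3 HN3].
    destruct (HD 3%nat ltac:(lia)) as [N4 HN4].
    destruct (HD 4%nat ltac:(lia)) as [N5 HN5].
    set (n := (N0 + N1 + N2 + N3 + N4 + N5)%nat).
    specialize (HN0 n ltac:(unfold n; lia)). specialize (HN1 n ltac:(unfold n; lia)).
    specialize (HN2 n ltac:(unfold n; lia)). specialize (HN3 n ltac:(unfold n; lia)).
    specialize (HN4 n ltac:(unfold n; lia)). specialize (HN5 n ltac:(unfold n; lia)).
    assert (Lo : riemann4 w0 M n <= riemann4 (sl (fun q => chi a q * chi a q * grad2 h q / 2)) M n).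
    { apply riemann4_le; auto. intros y1 y2 y3 y4 _. unfold w0, sl.
      set (q := mkP 0 y1 y2 y3 y4).
      pose proof (grad2_nonneg h q). pose proof (chi_mono a a0 q Ha0 Ha Haa0).
      pose proof (chi_range a0 q).
      assert (chi a0 q * chi a0 q <= chi a q * chi a q) by nra.
      unfold Rdiv. apply Rmult_le_compat_r; [lra|]. apply Rmult_le_compat_r; auto. }
    assert (Up : riemann4 (sl (fun q => chi a q * chi a q * grad2 h q / 2)) M n <=
      riemann4 (sl (partial 1 (den (exG a h 1)))) M n + (riemann4 (sl (partial 2 (den (exG a h 2)))) M n +
      (riemann4 (sl (partial 3 (den (exG a h 3)))) M n + (riemann4 (sl (partial 4 (den (exG a h 4)))) M n +
       64 / T ^ 2 * riemann4 (sl (ef A phi)) M n)))).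
    { rewrite <- riemann4_scal, <- !riemann4_plus. apply riemann4_le; auto.
      intros y1 y2 y3 y4 _. unfold sl. set (q := mkP 0 y1 y2 y3 y4).
      assert (HL : Lap h q = 0) by (apply lap_F with phi; auto).
      pose proof (G_ineq a h q Ha Hh HL) as HG.
      pose proof (dchi2_bound a q Ha) as HB2. rewrite HlnA in HB2.
      pose proof (F_sq_le A phi j k q Hj Hk) as HF. fold h in HF.
      pose proof (dchi2_nonneg a q).
      pose proof (sq_nn (h q)).
      assert (Ha2' : 1 <= a ^ 2) by nra.
      assert (HT2 : 0 < T ^ 2) by nra.
      assert (Hd : dchi2 a q <= 16 / T ^ 2).
      { eapply Rle_trans; [exact HB2|]. unfold Rdiv. apply Rmult_le_compat_l; [lra|].
        apply Rinv_le_contravar; [lra|]. nra. }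
      assert (2 * (h q * h q) * dchi2 a q <= 64 / T ^ 2 * ef A phi q).
      { apply Rle_trans with (2 * (2 * ef A phi q) * (16 / T ^ 2)).
        - assert (X1 : 2 * (h q * h q) <= 2 * (2 * ef A phi q)) by lra.
          assert (X2 : 0 <= 2 * (h q * h q)) by lra.
          apply Rmult_le_compat; auto.
        - right. field. lra. }
      lra. }
    assert (H64 : 64 / T ^ 2 * riemann4 (sl (ef A phi)) M n <= 64 / T ^ 2 * (Rabs E + 1)).
    { apply Rmult_le_compat_l. apply Rlt_le, Rdiv_lt_0_compat; [lra|nra]. pose proof (Rle_abs E). lra. }
    assert (Hsmall : 64 / T ^ 2 * (Rabs E + 1) < c / 2).
    { assert (HQ1 : 128 * (Rabs E + 1) / c < T) by (unfold T, M0; lra).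
      assert (HQ2 : 128 * (Rabs E + 1) < T * c).
      { apply Rmult_lt_reg_r with (/ c). apply Rinv_0_lt_compat; auto.
        replace (T * c * / c) with T by (field; lra). exact HQ1. }
      assert (HQ3 : 64 / T ^ 2 * (Rabs E + 1) <= 64 / T * (Rabs E + 1)).
      { apply Rmult_le_compat_r; [pose proof (Rabs_pos E); lra|]. unfold Rdiv.
        apply Rmult_le_compat_l; [lra|]. apply Rinv_le_contravar; nra. }
      apply Rle_lt_trans with (1 := HQ3).
      apply Rmult_lt_reg_r with (2 * T); [lra|].
      replace (64 / T * (Rabs E + 1) * (2 * T)) with (128 * (Rabs E + 1)) by (field; lra).
      lra. }
    apply Rlt_le in HN2, HN3, HN4, HN5.
    apply abs_le_split in HN2. apply abs_le_split in HN3.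
    apply abs_le_split in HN4. apply abs_le_split in HN5.
    lra.
Qed.


Lemma SD_zero_comp A phi p j : den (exSD A phi) p = 0 -> (1 <= j <= 4)%nat ->
  Dr A phi j p = 0 /\ Di A phi j p = 0.
Proof.
  unfold exSD, exS4. cbn [den]. intros H Hj.
  pose proof (sq_nn (Dr A phi 1 p)). pose proof (sq_nn (Dr A phi 2 p)).
  pose proof (sq_nn (Dr A phi 3 p)). pose proof (sq_nn (Dr A phi 4 p)).
  pose proof (sq_nn (Di A phi 1 p)). pose proof (sq_nn (Di A phi 2 p)).
  pose proof (sq_nn (Di A phi 3 p)). pose proof (sq_nn (Di A phi 4 p)).
  destruct j as [|[|[|[|[|]]]]]; try lia; split; nra.
Qed.

Lemma Jc_zero A phi E : SM A phi -> is_MKG A phi -> StaticHyp A phi -> energy0_is A phi E ->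
  forall m p, (m < 5)%nat -> c0 p = 0 -> Jc A phi m p = 0.
Proof.
  intros HS HM HT HE m p Hm Hp. destruct p as [p0 p1 p2 p3 p4]. simpl in Hp. subst p0.
  pose proof (phase1 A phi E HS HM HT HE p1 p2 p3 p4) as H1.
  unfold Jc.
  destruct m as [|m].
  - destruct HT as [_ HD0]. unfold Dr, Di. rewrite HD0. simpl. ring.
  - destruct (SD_zero_comp A phi _ (S m) H1) as [Z1 Z2]; [lia|]. rewrite Z1, Z2. ring.
Qed.

Lemma null_line g : (forall s, derivable_pt_lim g s 0) -> forall a b, g a = g b.
Proof.
  intros H a b. destruct (Rtotal_order a b) as [Hab|[Hab|Hab]].
  - destruct (MVT_cor2 g (fun _ => 0) a b Hab) as [c [Hc _]]; [intros; apply H|]. lra.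
  - subst; reflexivity.
  - destruct (MVT_cor2 g (fun _ => 0) b a Hab) as [c [Hc _]]; [intros; apply H|]. lra.
Qed.

Lemma grad_zero_const f : allk f ->
  (forall x1 x2 x3 x4 l, (1 <= l <= 4)%nat -> partial l f (mkP 0 x1 x2 x3 x4) = 0) ->
  forall x1 x2 x3 x4, f (mkP 0 x1 x2 x3 x4) = f (mkP 0 0 0 0 0).
Proof.
  intros Hf Hg x1 x2 x3 x4.
  assert (D : forall l p, (1 <= l <= 4)%nat -> c0 p = 0 -> Dv l f p 0).
  { intros l p Hl Hp. destruct p as [p0 p1 p2 p3 p4]. simpl in Hp; subst p0.
    pose proof (Ck_Dv 0 f l (mkP 0 p1 p2 p3 p4) (Hf 1%nat) ltac:(lia)) as HD.
    rewrite (Hg p1 p2 p3 p4 l Hl) in HD. exact HD. }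
  transitivity (f (mkP 0 0 x2 x3 x4)).
  { apply (null_line (fun s => f (mkP 0 s x2 x3 x4))). intro s.
    exact (D 1%nat (mkP 0 s x2 x3 x4) ltac:(lia) eq_refl). }
  transitivity (f (mkP 0 0 0 x3 x4)).
  { apply (null_line (fun s => f (mkP 0 0 s x3 x4))). intro s.
    exact (D 2%nat (mkP 0 0 s x3 x4) ltac:(lia) eq_refl). }
  transitivity (f (mkP 0 0 0 0 x4)).
  { apply (null_line (fun s => f (mkP 0 0 0 s x4))). intro s.
    exact (D 3%nat (mkP 0 0 0 s x4) ltac:(lia) eq_refl). }
  apply (null_line (fun s => f (mkP 0 0 0 0 s))). intro s.
  exact (D 4%nat (mkP 0 0 0 0 s) ltac:(lia) eq_refl).
Qed.

Lemma grad2_zero_comp h q l : grad2 h q = 0 -> (1 <= l <= 4)%nat -> partial l h q = 0.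
Proof.
  unfold grad2. intros H Hl.
  pose proof (sq_nn (partial 1 h q)). pose proof (sq_nn (partial 2 h q)).
  pose proof (sq_nn (partial 3 h q)). pose proof (sq_nn (partial 4 h q)).
  destruct l as [|[|[|[|[|]]]]]; try lia; nra.
Qed.

Lemma F_zero A phi E j k : SM A phi -> is_MKG A phi -> StaticHyp A phi -> energy0_is A phi E ->
  (1 <= j <= 4)%nat -> (1 <= k <= 4)%nat -> forall x1 x2 x3 x4, Fcurv A j k (mkP 0 x1 x2 x3 x4) = 0.
Proof.
  intros HS HM HT HE Hj Hk.
  assert (HJ := Jc_zero A phi E HS HM HT HE).
  assert (Hc : forall x1 x2 x3 x4, Fcurv A j k (mkP 0 x1 x2 x3 x4) = Fcurv A j k (mkP 0 0 0 0 0)).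
  { apply grad_zero_const. apply (allk_F A phi); auto; lia.
    intros. apply grad2_zero_comp; auto. apply (phase2_grad A phi E); auto. }
  set (c := Fcurv A j k (mkP 0 0 0 0 0)) in *.
  intros. rewrite Hc. destruct (Req_dec c 0) as [Z|NZ]; auto. exfalso.
  assert (Hc2 : 0 < c * c) by (assert (c * c <> 0) by (intro; apply NZ; nra); nra).
  set (M := (Rabs E + 2) / (c * c) + 1).
  assert (HQ : 0 <= (Rabs E + 2) / (c * c)).
  { unfold Rdiv. apply Rmult_le_pos; [pose proof (Rabs_pos E); lra| left; apply Rinv_0_lt_compat; lra]. }
  assert (HM0 : 1 <= M) by (unfold M; lra).
  assert (HcM : c * c * M = Rabs E + 2 + c * c) by (unfold M; field; lra).
  destruct (energy_bound A phi E HS HT HE M ltac:(lra)) as [N1 HN1].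
  specialize (HN1 N1 (le_n _)).
  assert (Lo : riemann4 (fun _ _ _ _ => c * c / 2) M N1 <= riemann4 (sl (ef A phi)) M N1).
  { apply riemann4_le; [lra|]. intros y1 y2 y3 y4 _. unfold sl.
    pose proof (F_sq_le A phi j k (mkP 0 y1 y2 y3 y4) Hj Hk) as HF. rewrite Hc in HF. fold c in HF. lra. }
  rewrite riemann4_const in Lo by lra.
  assert (H2M : 2 * M <= (2 * M) ^ 4).
  { assert (1 <= 2 * M) by lra. assert (1 <= (2 * M) ^ 3) by (apply pow_R1_Rle; lra).
    replace ((2 * M) ^ 4) with ((2 * M) * (2 * M) ^ 3) by ring. nra. }
  assert (c * c / 2 * (2 * M) <= c * c / 2 * (2 * M) ^ 4) by (apply Rmult_le_compat_l; lra).
  pose proof (Rle_abs E). nra.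
Qed.

Lemma ef_zero A phi E : SM A phi -> is_MKG A phi -> StaticHyp A phi -> energy0_is A phi E ->
  forall x1 x2 x3 x4, ef A phi (mkP 0 x1 x2 x3 x4) = 0.
Proof.
  intros HS HM HT HE x1 x2 x3 x4.
  pose proof (phase1 A phi E HS HM HT HE x1 x2 x3 x4) as H1.
  unfold ef. rewrite H1. unfold exSF, exS4. cbn [den].
  rewrite !(F_zero A phi E) by (auto; lia). field.
Qed.

Lemma cv_const_zero I : Un_cv (fun _ => 0) I -> I = 0.
Proof.
  intro H. apply (UL_sequence (fun _ => 0)); auto.
  intros e He. exists 0%nat. intros. unfold R_dist. rewrite Rminus_diag, Rabs_R0; lra.
Qed.


Theorem mainTheorem12 (A : Conn) (phi : CField) :
  smooth_sol A phi ->
  is_MKG A phi ->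
  (* iota_T F = 0 with T = d_t *)
  (forall nu, (nu < 5)%nat -> forall p, Fcurv A 0 nu p = 0) ->
  (* D_T phi = 0 *)
  (forall p, Dcov A phi 0 p = (0, 0)) ->
  (* finite energy on {0} x R^4 *)
  (exists E, energy0_is A phi E) ->
  forall E, energy0_is A phi E -> E = 0.
Proof.
  intros Hsm HM HF0 HD0 _ E HE.
  assert (HS := SM_of A phi Hsm).
  assert (HT : StaticHyp A phi) by (split; auto).
  assert (Hz : forall Rb n, riemann4 (edens A phi) Rb n = 0).
  { intros Rb n. rewrite edens_eq by auto.
    rewrite (riemann4_ext _ (fun _ _ _ _ => 0 * 1)).
    - rewrite riemann4_scal. ring.
    - intros. unfold sl. rewrite (ef_zero A phi E); auto. ring. }
  assert (HI : forall I, (exists Rb, Rb > 0 /\ cube_integral (edens A phi) Rb I) -> I = 0).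
  { intros I [Rb [_ HC]]. apply cv_const_zero. unfold cube_integral in HC.
    eapply Un_cv_ext; [|exact HC]. intro n. apply Hz. }
  destruct HE as [Hub Hlub].
  assert (H0in : exists Rb, Rb > 0 /\ cube_integral (edens A phi) Rb 0).
  { exists 1. split; [lra|]. unfold cube_integral.
    intros e He. exists 0%nat. intros. unfold R_dist. rewrite Hz, Rminus_diag, Rabs_R0. lra. }
  assert (E0 : 0 <= E) by (apply Hub; exact H0in).
  assert (E1 : E <= 0).
  { apply Hlub. intros I HIn. rewrite (HI I HIn). lra. }
  lra.
Qed.
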